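(* With the notation of the context, the function $f:\mathbb R\times[0,\infty)\to\mathbb R$ satisfies: (i) $f(x,z)\geq x^2$ for all $x\in\mathbb R$, $z\geq 0$; (ii) $f$ is of class $C^2$ and convex; (iii) for every $x\in\mathbb R$: $x\in\bigcup_{n=1}^\infty E_n$ if and only if there exists $z\geq0$ with $f(x,z)=x^2$; (iv) for all $x\in\mathbb R$ and $z\geq0$, if $f(x,z)>x^2$ then $\frac{\partial f}{\partial z}(x,z)<0$.
   Context: Let $\phi:[0,1]\to[0,1]$ be given by: $\phi(\alpha)$ is the unique real $x$ with $2x^3+x=\frac{1-\alpha}{2-\alpha}$ (a continuous decreasing function). Let $F_1\subset F_2\subset\cdots$ be closed subsets of $[0,1]$, and put $E_n=(\mathbb R\setminus(-1,2))\cup\phi(F_n)$. Define $a_n(x)=\max(E_n\cap(-\infty,x])$ and $b_n(x)=\min(E_n\cap[x,\infty))$ for $x\in\mathbb R$. Put $g_n(x)=(x-a_n(x))^3(b_n(x)-x)^3$ and $h_n(z)=((n-z)_+)^3$, where $t_+=\max(t,0)$. Let $(c_n)$ be a sequence of positive reals with $\sum_{n=1}^\infty\frac{81^2}{6}n^3c_n<1$. Define $$f(x,z)=x^2+\sum_{n=1}^\infty c_n g_n(x)h_n(z),\qquad x\in\mathbb R,\ z\geq0.$$ *)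

(* Defs.v *)
From Stdlib Require Import Reals Lra Rtopology ClassicalEpsilon.
Open Scope R_scope.

(* phi(alpha) = the unique real x with 2x^3 + x = (1-alpha)/(2-alpha).
   (x |-> 2x^3+x is a strictly increasing bijection of R, so this is well defined.) *)
Definition phi (alpha : R) : R :=
  epsilon (inhabits 0) (fun x => 2 * x ^ 3 + x = (1 - alpha) / (2 - alpha)).

Definition E (F : nat -> R -> Prop) (n : nat) (x : R) : Prop :=
  x <= -1 \/ 2 <= x \/ exists alpha, F n alpha /\ x = phi alpha.

Definition a_ (F : nat -> R -> Prop) (n : nat) (x : R) : R :=
  epsilon (inhabits 0)
    (fun y => E F n y /\ y <= x /\ forall w, E F n w -> w <= x -> w <= y).

Definition b_ (F : nat -> R -> Prop) (n : nat) (x : R) : R :=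
  epsilon (inhabits 0)
    (fun y => E F n y /\ x <= y /\ forall w, E F n w -> x <= w -> y <= w).

Definition g_ (F : nat -> R -> Prop) (n : nat) (x : R) : R :=
  (x - a_ F n x) ^ 3 * (b_ F n x - x) ^ 3.

Definition h_ (n : nat) (z : R) : R := (Rmax (INR n - z) 0) ^ 3.

(* f(x,z) = x^2 + sum_{n>=1} c_n g_n(x) h_n(z)   (series indexed by k = n-1) *)
Definition f_ (F : nat -> R -> Prop) (c : nat -> R) (x z : R) : R :=
  x ^ 2 + epsilon (inhabits 0)
    (fun l => infinite_sum (fun k => c (S k) * g_ F (S k) x * h_ (S k) z) l).

Definition diff_within (u : R -> R -> R) (x z dx dz : R) : Prop :=
  forall eps, 0 < eps -> exists delta, 0 < delta /\
    forall x' z', 0 <= z' -> Rabs (x' - x) < delta -> Rabs (z' - z) < delta ->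
      Rabs (u x' z' - u x z - dx * (x' - x) - dz * (z' - z))
        <= eps * (Rabs (x' - x) + Rabs (z' - z)).

Definition cont_within (u : R -> R -> R) (x z : R) : Prop :=
  forall eps, 0 < eps -> exists delta, 0 < delta /\
    forall x' z', 0 <= z' -> Rabs (x' - x) < delta -> Rabs (z' - z) < delta ->
      Rabs (u x' z' - u x z) < eps.

(* u is of class C^2 on R x [0,oo) (derivatives one-sided at the boundary z = 0). *)
Definition C2_on_D (u : R -> R -> R) : Prop :=
  exists u1 u2 u11 u12 u21 u22 : R -> R -> R,
    forall x z, 0 <= z ->
      diff_within u x z (u1 x z) (u2 x z) /\
      diff_within u1 x z (u11 x z) (u12 x z) /\
      diff_within u2 x z (u21 x z) (u22 x z) /\
      cont_within u11 x z /\ cont_within u12 x z /\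
      cont_within u21 x z /\ cont_within u22 x z.

Definition convex_on_D (u : R -> R -> R) : Prop :=
  forall x1 z1 x2 z2 t, 0 <= z1 -> 0 <= z2 -> 0 <= t <= 1 ->
    u (t * x1 + (1 - t) * x2) (t * z1 + (1 - t) * z2)
      <= t * u x1 z1 + (1 - t) * u x2 z2.

Definition dz_within (u : R -> R -> R) (x z l : R) : Prop :=
  forall eps, 0 < eps -> exists delta, 0 < delta /\
    forall z', 0 <= z' -> Rabs (z' - z) < delta ->
      Rabs (u x z' - u x z - l * (z' - z)) <= eps * Rabs (z' - z).

(* Main.v *)
Require Import Defs.
From Stdlib Require Import Reals Lra Lia Psatz Rtopology ClassicalEpsilon Classical.
Open Scope R_scope.

Definition ser (u : nat -> R) : R := epsilon (inhabits 0) (fun l => infinite_sum u l).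

Lemma ser_spec u l : infinite_sum u l -> infinite_sum u (ser u).
Proof. intro H. unfold ser. apply epsilon_spec. eauto. Qed.

Lemma ser_eq u l : infinite_sum u l -> ser u = l.
Proof. intro H. apply (uniqueness_sum u); auto. eapply ser_spec; eauto. Qed.

Lemma sum_f_ext u v n : (forall k, u k = v k) -> sum_f_R0 u n = sum_f_R0 v n.
Proof. intro H; induction n; simpl; rewrite ?IHn, ?H; auto. Qed.

Lemma is_lin u v a b lu lv : infinite_sum u lu -> infinite_sum v lv ->
  infinite_sum (fun k => a * u k + b * v k) (a * lu + b * lv).
Proof.
  intros Hu Hv.
  assert (E : forall n, sum_f_R0 (fun k => a * u k + b * v k) n =
     a * sum_f_R0 u n + b * sum_f_R0 v n).
  { induction n; simpl; [ring| rewrite IHn; ring]. }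
  intros eps He.
  assert (H2 : Un_cv (fun n => a * sum_f_R0 u n + b * sum_f_R0 v n) (a*lu+b*lv)).
  { apply CV_plus; apply CV_mult; try (intros e He'; exists 0%nat; intros;
      unfold Rdist; rewrite Rminus_diag, Rabs_R0; lra); assumption. }
  destruct (H2 eps He) as [N HN]. exists N. intros n Hn. rewrite E. apply HN; auto.
Qed.

Lemma is_ext u v l : (forall k, u k = v k) -> infinite_sum u l -> infinite_sum v l.
Proof.
  intros H Hu eps He. destruct (Hu eps He) as [N HN]. exists N. intros n Hn.
  rewrite <- (sum_f_ext u v n H). auto.
Qed.

Lemma is_zero : infinite_sum (fun _ => 0) 0.
Proof.
  intros eps He. exists 0%nat. intros n _.
  assert (sum_f_R0 (fun _ => 0) n = 0) by (induction n; simpl; lra).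
  unfold Rdist. rewrite H. rewrite Rminus_diag, Rabs_R0. lra.
Qed.

Lemma summable_comp u v lv : (forall k, Rabs (u k) <= v k) -> infinite_sum v lv ->
  exists l, infinite_sum u l.
Proof.
  intros H Hv.
  assert (Hp : {l | Un_cv (fun N => sum_f_R0 (fun k => (Rabs (u k) + u k)/2) N) l}).
  { apply Rseries_CV_comp with v. intro n. specialize (H n).
    split; unfold Rabs in *; destruct (Rcase_abs (u n)); lra. exists lv; exact Hv. }
  assert (Hm : {l | Un_cv (fun N => sum_f_R0 (fun k => (Rabs (u k) - u k)/2) N) l}).
  { apply Rseries_CV_comp with v. intro n. specialize (H n).
    split; unfold Rabs in *; destruct (Rcase_abs (u n)); lra. exists lv; exact Hv. }
  destruct Hp as [lp Hp]; destruct Hm as [lm Hm].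
  exists (1*lp + (-1)*lm).
  apply is_ext with (fun k => 1 * ((Rabs (u k) + u k)/2) + (-1) * ((Rabs (u k) - u k)/2)).
  intro; field. apply is_lin; assumption.
Qed.

Lemma tail_bound u d lu ld N : (forall k, Rabs (u k) <= d k) ->
  infinite_sum u lu -> infinite_sum d ld ->
  Rabs (lu - sum_f_R0 u N) <= ld - sum_f_R0 d N.
Proof.
  intros H Hu Hd.
  exact (sum_maj1 (fun k _ => u k) d 0 lu ld N Hu Hd (fun n => H n)).
Qed.

Lemma abs_bound u d lu ld : (forall k, Rabs (u k) <= d k) ->
  infinite_sum u lu -> infinite_sum d ld -> Rabs lu <= ld.
Proof.
  intros H Hu Hd.
  exact (sum_cv_maj d (fun k _ => u k) 0 lu ld Hu Hd (fun n => H n)).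
Qed.

Lemma sum_le_lim u l N : infinite_sum u l -> (forall k, 0 <= u k) -> sum_f_R0 u N <= l.
Proof. intros. apply sum_incr; auto. Qed.

Lemma lim_le u v lu lv : (forall k, u k <= v k) -> infinite_sum u lu -> infinite_sum v lv -> lu <= lv.
Proof.
  intros H Hu Hv. refine (Rle_cv_lim _ Hu Hv).
  intro n; induction n; simpl; auto. specialize (H (S n)); lra.
Qed.

Lemma tail_small d ld : infinite_sum d ld -> forall eps, 0 < eps ->
  exists N, ld - sum_f_R0 d N < eps.
Proof.
  intros Hd eps He. destruct (Hd eps He) as [N HN]. exists N.
  specialize (HN N (le_n _)). unfold Rdist in HN. rewrite Rabs_minus_sym in HN.
  unfold Rabs in HN; destruct Rcase_abs; lra.
Qed.

Definition ctn (f : R -> R) (x : R) := forall e, 0 < e -> exists d, 0 < d /\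
  forall y, Rabs (y - x) < d -> Rabs (f y - f x) < e.

Lemma dpl_bound f x l : derivable_pt_lim f x l -> forall e, 0 < e -> exists d, 0 < d /\
  forall y, Rabs (y - x) < d -> Rabs (f y - f x - l * (y - x)) <= e * Rabs (y - x).
Proof.
  intros H e He. destruct (H e He) as [d Hd]. exists d. split; [apply cond_pos|].
  intros y Hy. destruct (Req_dec y x) as [->|Hne].
  - replace (f x - f x - l * (x - x)) with 0 by ring. rewrite Rminus_diag, Rabs_R0; lra.
  - assert (Hh : y - x <> 0) by lra.
    specialize (Hd (y - x) Hh Hy). replace (x + (y - x)) with y in Hd by ring.
    replace (f y - f x - l * (y - x)) with (((f y - f x) / (y - x) - l) * (y - x)) by (field; auto).
    rewrite Rabs_mult. apply Rmult_le_compat_r; [apply Rabs_pos| lra].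
Qed.

Lemma dpl_ctn f x l : derivable_pt_lim f x l -> ctn f x.
Proof.
  intros H e He. destruct (dpl_bound f x l H 1 Rlt_0_1) as [d [Hd H1]].
  exists (Rmin d (e / (Rabs l + 2))). split.
  { apply Rmin_pos; auto. apply Rdiv_lt_0_compat; auto. pose proof (Rabs_pos l); lra. }
  intros y Hy. assert (Hy1 : Rabs (y - x) < d) by (eapply Rlt_le_trans; [exact Hy|apply Rmin_l]).
  assert (Hy2 : Rabs (y - x) < e / (Rabs l + 2)) by (eapply Rlt_le_trans; [exact Hy|apply Rmin_r]).
  specialize (H1 y Hy1).
  assert (Rabs (f y - f x) <= (Rabs l + 1) * Rabs (y - x)).
  { replace (f y - f x) with ((f y - f x - l * (y - x)) + l * (y - x)) by ring.
    eapply Rle_trans; [apply Rabs_triang|]. rewrite Rabs_mult. lra. }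
  pose proof (Rabs_pos l). pose proof (Rabs_pos (y - x)).
  apply Rmult_lt_compat_l with (r := Rabs l + 2) in Hy2; [|lra].
  replace ((Rabs l + 2) * (e / (Rabs l + 2))) with e in Hy2 by (field; lra). nra.
Qed.

Lemma deriv_local f g x l : (exists d, 0 < d /\ forall y, Rabs (y - x) < d -> f y = g y) ->
  derivable_pt_lim g x l -> derivable_pt_lim f x l.
Proof.
  intros [d [Hd Hfg]] Hg e He. destruct (Hg e He) as [d' Hd'].
  assert (Hp : 0 < Rmin d d') by (apply Rmin_pos; auto; apply cond_pos).
  exists (mkposreal _ Hp). intros h Hh Hlt. simpl in Hlt.
  rewrite (Hfg (x + h)), (Hfg x).
  - apply Hd'; auto. eapply Rlt_le_trans; [exact Hlt| apply Rmin_r].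
  - rewrite Rminus_diag, Rabs_R0; auto.
  - replace (x + h - x) with h by ring. eapply Rlt_le_trans; [exact Hlt| apply Rmin_l].
Qed.

Lemma deriv_zero_bound f x C : f x = 0 -> 0 < C ->
  (forall y, Rabs (y - x) < 1 -> Rabs (f y) <= C * (y - x)^2) ->
  derivable_pt_lim f x 0.
Proof.
  intros H0 HC Hb e He.
  assert (Hp : 0 < Rmin 1 (e / (2 * C))) by (apply Rmin_pos; [lra| apply Rdiv_lt_0_compat; lra]).
  exists (mkposreal _ Hp). intros h Hh Hlt. simpl in Hlt.
  assert (h1 : Rabs h < 1) by (eapply Rlt_le_trans; [exact Hlt| apply Rmin_l]).
  assert (h2 : Rabs h < e / (2 * C)) by (eapply Rlt_le_trans; [exact Hlt| apply Rmin_r]).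
  specialize (Hb (x + h)). replace (x + h - x) with h in Hb by ring. specialize (Hb h1).
  rewrite H0, Rminus_0_r, Rminus_0_r. unfold Rdiv. rewrite Rabs_mult, Rabs_inv.
  assert (Hah : 0 < Rabs h) by (apply Rabs_pos_lt; auto).
  apply Rmult_lt_reg_r with (Rabs h); auto. rewrite Rmult_assoc, Rinv_l by lra.
  rewrite Rmult_1_r. replace (h ^ 2) with (Rabs h * Rabs h) in Hb
    by (rewrite <- Rabs_mult; rewrite Rabs_right; [ring| nra]).
  apply Rmult_lt_compat_l with (r := 2 * C) in h2; [|lra].
  replace (2 * C * (e / (2 * C))) with e in h2 by (field; lra). nra.
Qed.

Lemma lip_mvt f f' a b M : (forall y, derivable_pt_lim f y (f' y)) ->
  (forall y, Rmin a b <= y <= Rmax a b -> Rabs (f' y) <= M) ->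
  Rabs (f b - f a) <= M * Rabs (b - a).
Proof.
  intros Hd Hb. destruct (Rtotal_order a b) as [Hlt|[Heq|Hgt]].
  - destruct (MVT_cor2 f f' a b Hlt (fun c _ => Hd c)) as [c [Hc Hcr]].
    rewrite Hc, Rabs_mult. apply Rmult_le_compat_r; [apply Rabs_pos|].
    apply Hb. rewrite Rmin_left, Rmax_right by lra. lra.
  - subst. rewrite !Rminus_diag, Rabs_R0, Rmult_0_r; lra.
  - destruct (MVT_cor2 f f' b a Hgt (fun c _ => Hd c)) as [c [Hc Hcr]].
    rewrite <- Rabs_Ropp, Ropp_minus_distr, Hc, Rabs_mult, <- (Rabs_Ropp (b - a)), Ropp_minus_distr.
    apply Rmult_le_compat_r; [apply Rabs_pos|].
    apply Hb. rewrite Rmin_right, Rmax_left by lra. lra.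
Qed.

Lemma fin_delta (P : nat -> R -> Prop) N :
  (forall k d d', 0 < d' <= d -> P k d -> P k d') ->
  (forall k, (k <= N)%nat -> exists d, 0 < d /\ P k d) ->
  exists d, 0 < d /\ forall k, (k <= N)%nat -> P k d.
Proof.
  intros Hm. induction N as [|N IH]; intros H.
  - destruct (H 0%nat (le_n _)) as [d [Hd Hp]]. exists d. split; auto.
    intros k Hk. assert (k = 0%nat) by lia. subst; auto.
  - destruct IH as [d1 [Hd1 Hp1]]. { intros k Hk; apply H; lia. }
    destruct (H (S N) (le_n _)) as [d2 [Hd2 Hp2]].
    exists (Rmin d1 d2). split. { apply Rmin_pos; auto. }
    intros k Hk. destruct (Nat.eq_dec k (S N)) as [->|Hne].
    + apply Hm with d2; auto. split; [apply Rmin_pos; auto| apply Rmin_r].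
    + apply Hm with d1; [split; [apply Rmin_pos; auto| apply Rmin_l]| apply Hp1; lia].
Qed.

Lemma head_bound u N c : (forall k, (k <= N)%nat -> Rabs (u k) <= c) ->
  Rabs (sum_f_R0 u N) <= (INR N + 1) * c.
Proof.
  induction N as [|N IH]; intros H.
  - simpl. rewrite Rplus_0_l, Rmult_1_l. apply H; lia.
  - simpl sum_f_R0. eapply Rle_trans; [apply Rabs_triang|].
    rewrite S_INR. specialize (IH (fun k Hk => H k ltac:(lia))).
    specialize (H (S N) (le_n _)). lra.
Qed.

Lemma prod_diff A B a' b' x z : derivable_pt_lim A x a' -> derivable_pt_lim B z b' ->
  forall e, 0 < e -> exists d, 0 < d /\ forall x' z', Rabs (x' - x) < d -> Rabs (z' - z) < d ->
   Rabs (A x' * B z' - A x * B z - a' * B z * (x' - x) - A x * b' * (z' - z))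
     <= e * (Rabs (x' - x) + Rabs (z' - z)).
Proof.
  intros HA HB e He.
  pose proof (Rabs_pos (B z)) as P1. pose proof (Rabs_pos a') as P2. pose proof (Rabs_pos (A x)) as P3.
  destruct (dpl_bound A x a' HA (e / 2 / (Rabs (B z) + 1))) as [d1 [Hd1 H1]].
  { apply Rdiv_lt_0_compat; lra. }
  destruct (dpl_bound B z b' HB (e / (Rabs (A x) + 1))) as [d2 [Hd2 H2]].
  { apply Rdiv_lt_0_compat; lra. }
  destruct (dpl_ctn B z b' HB (Rmin 1 (e / 2 / (Rabs a' + 1)))) as [d3 [Hd3 H3]].
  { apply Rmin_pos; [lra|]. apply Rdiv_lt_0_compat; lra. }
  exists (Rmin d1 (Rmin d2 d3)). split. { repeat apply Rmin_pos; auto. }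
  intros x' z' Hx Hz.
  assert (Hx1 : Rabs (x' - x) < d1) by (eapply Rlt_le_trans; [exact Hx| apply Rmin_l]).
  assert (M1 : Rmin d1 (Rmin d2 d3) <= d2) by (apply Rle_trans with (Rmin d2 d3); [apply Rmin_r|apply Rmin_l]).
  assert (M2 : Rmin d1 (Rmin d2 d3) <= d3) by (apply Rle_trans with (Rmin d2 d3); [apply Rmin_r|apply Rmin_r]).
  assert (Hz2 : Rabs (z' - z) < d2) by lra.
  assert (Hz3 : Rabs (z' - z) < d3) by lra.
  specialize (H1 x' Hx1). specialize (H2 z' Hz2). specialize (H3 z' Hz3).
  assert (H3a : Rabs (B z' - B z) < 1) by (eapply Rlt_le_trans; [exact H3| apply Rmin_l]).
  assert (H3b : Rabs (B z' - B z) < e / 2 / (Rabs a' + 1)) by (eapply Rlt_le_trans; [exact H3| apply Rmin_r]).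
  assert (HBz' : Rabs (B z') <= Rabs (B z) + 1).
  { replace (B z') with (B z + (B z' - B z)) by ring. eapply Rle_trans; [apply Rabs_triang|]. lra. }
  replace (A x' * B z' - A x * B z - a' * B z * (x' - x) - A x * b' * (z' - z)) with
    ((A x' - A x - a' * (x' - x)) * B z' + a' * (x' - x) * (B z' - B z) + A x * (B z' - B z - b' * (z' - z))) by ring.
  set (dx := Rabs (x' - x)) in *. set (dz := Rabs (z' - z)) in *.
  assert (T1 : Rabs ((A x' - A x - a' * (x' - x)) * B z') <= e / 2 * dx).
  { rewrite Rabs_mult. pose proof (Rabs_pos (A x' - A x - a' * (x' - x))).
    apply Rle_trans with (e / 2 / (Rabs (B z) + 1) * dx * (Rabs (B z) + 1)).
    - apply Rmult_le_compat; auto; apply Rabs_pos.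
    - right. field. lra. }
  assert (T2 : Rabs (a' * (x' - x) * (B z' - B z)) <= e / 2 * dx).
  { rewrite !Rabs_mult. fold dx. pose proof (Rabs_pos (B z' - B z)). pose proof (Rabs_pos (x'-x)).
    apply Rle_trans with (Rabs a' * dx * (e / 2 / (Rabs a' + 1))).
    - apply Rmult_le_compat_l; [apply Rmult_le_pos; auto|lra].
    - apply Rle_trans with ((Rabs a' + 1) * dx * (e / 2 / (Rabs a' + 1))).
      + assert (0 < e / 2 / (Rabs a' + 1)) by (apply Rdiv_lt_0_compat; lra).
        apply Rmult_le_compat_r; [lra|]. unfold dx in *. nra.
      + right; field; lra. }
  assert (T3 : Rabs (A x * (B z' - B z - b' * (z' - z))) <= e * dz).
  { rewrite Rabs_mult. pose proof (Rabs_pos (z'-z)).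
    apply Rle_trans with (Rabs (A x) * (e / (Rabs (A x) + 1) * dz)).
    - apply Rmult_le_compat_l; auto.
    - apply Rle_trans with ((Rabs (A x) + 1) * (e / (Rabs (A x) + 1) * dz)).
      + apply Rmult_le_compat_r; [|lra]. apply Rmult_le_pos; [apply Rlt_le, Rdiv_lt_0_compat; lra| auto].
      + right; field; lra. }
  eapply Rle_trans; [apply Rabs_triang|]. eapply Rle_trans; [apply Rplus_le_compat_r; apply Rabs_triang|].
  lra.
Qed.

Lemma prod_ctn A B x z : ctn A x -> ctn B z ->
  forall e, 0 < e -> exists d, 0 < d /\ forall x' z', Rabs (x' - x) < d -> Rabs (z' - z) < d ->
   Rabs (A x' * B z' - A x * B z) < e.
Proof.
  intros HA HB e He.
  pose proof (Rabs_pos (B z)) as P1. pose proof (Rabs_pos (A x)) as P3.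
  destruct (HA (e / 2 / (Rabs (B z) + 1))) as [d1 [Hd1 H1]]. { apply Rdiv_lt_0_compat; lra. }
  destruct (HB (Rmin 1 (e / 2 / (Rabs (A x) + 1)))) as [d2 [Hd2 H2]].
  { apply Rmin_pos; [lra|apply Rdiv_lt_0_compat; lra]. }
  exists (Rmin d1 d2). split; [apply Rmin_pos; auto|].
  intros x' z' Hx Hz.
  specialize (H1 x' (Rlt_le_trans _ _ _ Hx (Rmin_l _ _))).
  specialize (H2 z' (Rlt_le_trans _ _ _ Hz (Rmin_r _ _))).
  assert (H2a : Rabs (B z' - B z) < 1) by (eapply Rlt_le_trans; [exact H2| apply Rmin_l]).
  assert (H2b : Rabs (B z' - B z) < e / 2 / (Rabs (A x) + 1)) by (eapply Rlt_le_trans; [exact H2| apply Rmin_r]).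
  assert (HBz' : Rabs (B z') <= Rabs (B z) + 1).
  { replace (B z') with (B z + (B z' - B z)) by ring. eapply Rle_trans; [apply Rabs_triang|]. lra. }
  replace (A x' * B z' - A x * B z) with ((A x' - A x) * B z' + A x * (B z' - B z)) by ring.
  eapply Rle_lt_trans; [apply Rabs_triang|]. rewrite !Rabs_mult.
  pose proof (Rabs_pos (A x' - A x)). pose proof (Rabs_pos (B z')).
  assert (Rabs (A x' - A x) * Rabs (B z') <= e / 2 / (Rabs (B z) + 1) * (Rabs (B z) + 1)).
  { apply Rmult_le_compat; auto; lra. }
  assert (Rabs (A x) * Rabs (B z' - B z) <= (Rabs (A x) + 1) * (e / 2 / (Rabs (A x) + 1))).
  { pose proof (Rabs_pos (B z' - B z)). nra. }
  assert (e / 2 / (Rabs (B z) + 1) * (Rabs (B z) + 1) = e/2) by (field; lra).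
  assert ((Rabs (A x) + 1) * (e / 2 / (Rabs (A x) + 1)) = e/2) by (field; lra).
  assert (Rabs (A x) * Rabs (B z' - B z) < (Rabs (A x) + 1) * (e / 2 / (Rabs (A x) + 1))
       \/ Rabs (A x' - A x) * Rabs (B z') < e / 2 / (Rabs (B z) + 1) * (Rabs (B z) + 1)).
  { left. apply Rle_lt_trans with ((Rabs (A x)) * (e / 2 / (Rabs (A x) + 1))).
    - apply Rmult_le_compat_l; lra.
    - apply Rmult_lt_compat_r; [apply Rdiv_lt_0_compat; lra| lra]. }
  lra.
Qed.

Lemma is_scale u a l : infinite_sum u l -> infinite_sum (fun k => a * u k) (a * l).
Proof.
  intro H. apply is_ext with (fun k => a * u k + 0 * u k). intro; ring.
  replace (a * l) with (a * l + 0 * l) by ring. apply is_lin; auto.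
Qed.

Lemma sum_scale u a N : sum_f_R0 (fun k => a * u k) N = a * sum_f_R0 u N.
Proof. induction N; simpl; [|rewrite IHN]; ring. Qed.

Lemma prod_summable (A B : nat -> R) al be lab :
  (forall k, Rabs (A k) <= al k) -> (forall k, Rabs (B k) <= be k) ->
  infinite_sum (fun k => al k * be k) lab ->
  infinite_sum (fun k => A k * B k) (ser (fun k => A k * B k)).
Proof.
  intros HA HB H. destruct (summable_comp (fun k => A k * B k) _ _ ltac:(intro k; cbv beta;
    rewrite Rabs_mult; apply Rmult_le_compat; try apply Rabs_pos; auto) H) as [l Hl].
  eapply ser_spec; eauto.
Qed.

Lemma Rabs4 a b c d : Rabs (a + b - c - d) <= Rabs a + Rabs b + Rabs c + Rabs d.
Proof.
  unfold Rminus. eapply Rle_trans; [apply Rabs_triang|]. rewrite Rabs_Ropp.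
  eapply Rle_trans; [apply Rplus_le_compat_r, Rabs_triang|]. rewrite Rabs_Ropp.
  pose proof (Rabs_triang a b). lra.
Qed.

Section SD.
Variables (A A' B B' : nat -> R -> R) (al be : nat -> R) (lab : R).
Hypothesis HA : forall k y, derivable_pt_lim (A k) y (A' k y).
Hypothesis HB : forall k y, derivable_pt_lim (B k) y (B' k y).
Hypothesis HAb : forall k y, Rabs (A k y) <= al k.
Hypothesis HA'b : forall k y, Rabs (A' k y) <= al k.
Hypothesis HBb : forall k y, 0 <= y -> Rabs (B k y) <= be k.
Hypothesis HB'b : forall k y, 0 <= y -> Rabs (B' k y) <= be k.
Hypothesis Hlab : infinite_sum (fun k => al k * be k) lab.

Lemma series_diff x z : 0 <= z ->
  diff_within (fun x z => ser (fun k => A k x * B k z)) x z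
    (ser (fun k => A' k x * B k z)) (ser (fun k => A k x * B' k z)).
Proof.
  intros Hz0 eps He.
  assert (Hal : forall k, 0 <= al k) by (intro k; eapply Rle_trans; [apply Rabs_pos| apply (HAb k 0)]).
  assert (Hbe : forall k, 0 <= be k) by (intro k; eapply Rle_trans; [apply Rabs_pos| apply (HBb k 0); lra]).
  destruct (tail_small _ _ Hlab (eps / 8)) as [N HN]; [lra|].
  set (c := eps / (2 * (INR N + 1))).
  assert (Hc : 0 < c) by (unfold c; apply Rdiv_lt_0_compat; [lra| pose proof (pos_INR N); lra]).
  destruct (fin_delta (fun k d => forall x' z', Rabs (x' - x) < d -> Rabs (z' - z) < d ->
     Rabs (A k x' * B k z' - A k x * B k z - A' k x * B k z * (x' - x) - A k x * B' k z * (z' - z))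
     <= c * (Rabs (x' - x) + Rabs (z' - z))) N) as [d [Hd Hdk]].
  { intros k d d' Hdd Hp x' z' H1 H2. apply Hp; lra. }
  { intros k _. apply (prod_diff (A k) (B k) _ _ x z (HA k x) (HB k z) c Hc). }
  exists d. split; auto. intros x' z' Hz' Hx Hz. cbv beta.
  set (dx := x' - x) in *. set (dz := z' - z) in *.
  set (e := fun k => A k x' * B k z' - A k x * B k z - A' k x * B k z * dx - A k x * B' k z * dz).
  assert (Hs1 : forall x z, 0 <= z -> infinite_sum (fun k => A k x * B k z) (ser (fun k => A k x * B k z))).
  { intros; eapply prod_summable; eauto. }
  assert (Hs2 : infinite_sum (fun k => A' k x * B k z) (ser (fun k => A' k x * B k z))).
  { eapply prod_summable; eauto. }
  assert (Hs3 : infinite_sum (fun k => A k x * B' k z) (ser (fun k => A k x * B' k z))).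
  { eapply prod_summable; eauto. }
  assert (Hse : infinite_sum e (ser (fun k => A k x' * B k z') - ser (fun k => A k x * B k z)
       - ser (fun k => A' k x * B k z) * dx - ser (fun k => A k x * B' k z) * dz)).
  { pose proof (is_lin _ _ 1 (-1) _ _ (Hs1 x' z' Hz') (Hs1 x z Hz0)) as L1.
    pose proof (is_lin _ _ dx dz _ _ Hs2 Hs3) as L2.
    pose proof (is_lin _ _ 1 (-1) _ _ L1 L2) as L3.
    eapply is_ext; [|replace (ser (fun k => A k x' * B k z') - ser (fun k => A k x * B k z)
       - ser (fun k => A' k x * B k z) * dx - ser (fun k => A k x * B' k z) * dz) with
       (1 * (1 * ser (fun k => A k x' * B k z') + -1 * ser (fun k => A k x * B k z)) +
        -1 * (dx * ser (fun k => A' k x * B k z) + dz * ser (fun k => A k x * B' k z))) by ring; exact L3].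
    intro k; unfold e; ring. }
  set (w := 2 * (Rabs dx + Rabs dz)).
  assert (Hw : 0 <= w) by (unfold w; pose proof (Rabs_pos dx); pose proof (Rabs_pos dz); lra).
  assert (Heb : forall k, Rabs (e k) <= w * (al k * be k)).
  { intro k. unfold e, w.
    assert (L1 : Rabs (A k x' - A k x) <= al k * Rabs dx).
    { apply lip_mvt with (A' k); auto. }
    assert (L2 : Rabs (B k z' - B k z) <= be k * Rabs dz).
    { apply lip_mvt with (B' k); auto. intros y Hy. apply HB'b.
      assert (0 <= Rmin z z') by (apply Rmin_glb; lra). lra. }
    replace (A k x' * B k z' - A k x * B k z - A' k x * B k z * dx - A k x * B' k z * dz) with
      ((A k x' - A k x) * B k z' + A k x * (B k z' - B k z) - A' k x * B k z * dx - A k x * B' k z * dz) by ring.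
    pose proof (HBb k z' Hz'). pose proof (HBb k z Hz0). pose proof (HB'b k z Hz0).
    pose proof (HAb k x). pose proof (HA'b k x). pose proof (Hal k). pose proof (Hbe k).
    pose proof (Rabs_pos dx). pose proof (Rabs_pos dz).
    eapply Rle_trans; [apply Rabs4|]. rewrite !Rabs_mult.
    pose proof (Rabs_pos (A k x' - A k x)). pose proof (Rabs_pos (B k z' - B k z)).
    pose proof (Rabs_pos (B k z')). pose proof (Rabs_pos (A k x)). pose proof (Rabs_pos (A' k x)).
    pose proof (Rabs_pos (B k z)). pose proof (Rabs_pos (B' k z)).
    assert (Rabs (A k x' - A k x) * Rabs (B k z') <= al k * Rabs dx * be k) by (apply Rmult_le_compat; auto).
    assert (Rabs (A k x) * Rabs (B k z' - B k z) <= al k * (be k * Rabs dz)) by (apply Rmult_le_compat; auto).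
    assert (Rabs (A' k x) * Rabs (B k z) * Rabs dx <= al k * be k * Rabs dx)
      by (apply Rmult_le_compat_r; auto; apply Rmult_le_compat; auto).
    assert (Rabs (A k x) * Rabs (B' k z) * Rabs dz <= al k * be k * Rabs dz)
      by (apply Rmult_le_compat_r; auto; apply Rmult_le_compat; auto).
    lra. }
  assert (Hd2 : infinite_sum (fun k => w * (al k * be k)) (w * lab)) by (apply is_scale; auto).
  pose proof (tail_bound e _ _ _ N Heb Hse Hd2) as T.
  rewrite sum_scale in T.
  assert (Hh : Rabs (sum_f_R0 e N) <= (INR N + 1) * (c * (Rabs dx + Rabs dz))).
  { apply head_bound. intros k Hk. apply Hdk; auto. }
  replace ((INR N + 1) * (c * (Rabs dx + Rabs dz))) with (eps / 2 * (Rabs dx + Rabs dz)) in Hh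
    by (unfold c; field; pose proof (pos_INR N); lra).
  assert (w * lab - w * sum_f_R0 (fun k => al k * be k) N <= w * (eps / 8)).
  { rewrite <- Rmult_minus_distr_l. apply Rmult_le_compat_l; lra. }
  set (V := ser (fun k => A k x' * B k z') - ser (fun k => A k x * B k z) -
     ser (fun k => A' k x * B k z) * dx - ser (fun k => A k x * B' k z) * dz) in *.
  replace (ser (fun k => A k x' * B k z') - ser (fun k => A k x * B k z) -
     ser (fun k => A' k x * B k z) * dx - ser (fun k => A k x * B' k z) * dz) with V
     by (unfold V; ring).
  replace V with ((V - sum_f_R0 e N) + sum_f_R0 e N) by ring.
  eapply Rle_trans; [apply Rabs_triang|]. unfold w in *. pose proof (Rabs_pos dx); pose proof (Rabs_pos dz).
  nra.
Qed.
End SD.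

Section SC.
Variables (A B : nat -> R -> R) (al be : nat -> R) (lab : R).
Hypothesis HA : forall k y, ctn (A k) y.
Hypothesis HB : forall k y, ctn (B k) y.
Hypothesis HAb : forall k y, Rabs (A k y) <= al k.
Hypothesis HBb : forall k y, 0 <= y -> Rabs (B k y) <= be k.
Hypothesis Hlab : infinite_sum (fun k => al k * be k) lab.

Lemma series_cont x z : 0 <= z ->
  cont_within (fun x z => ser (fun k => A k x * B k z)) x z.
Proof.
  intros Hz0 eps He.
  assert (Hal : forall k, 0 <= al k) by (intro k; eapply Rle_trans; [apply Rabs_pos| apply (HAb k 0)]).
  assert (Hbe : forall k, 0 <= be k) by (intro k; eapply Rle_trans; [apply Rabs_pos| apply (HBb k 0); lra]).
  destruct (tail_small _ _ Hlab (eps / 8)) as [N HN]; [lra|].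
  set (c := eps / (2 * (INR N + 1))).
  assert (Hc : 0 < c) by (unfold c; apply Rdiv_lt_0_compat; [lra| pose proof (pos_INR N); lra]).
  destruct (fin_delta (fun k d => forall x' z', Rabs (x' - x) < d -> Rabs (z' - z) < d ->
     Rabs (A k x' * B k z' - A k x * B k z) <= c) N) as [d [Hd Hdk]].
  { intros k d d' Hdd Hp x' z' H1 H2. apply Hp; lra. }
  { intros k _. destruct (prod_ctn (A k) (B k) x z (HA k x) (HB k z) c Hc) as [d [Hd Hp]].
    exists d; split; auto. intros; apply Rlt_le; auto. }
  exists d. split; auto. intros x' z' Hz' Hx Hz. cbv beta.
  set (e := fun k => A k x' * B k z' - A k x * B k z).
  assert (Hs1 : forall x z, 0 <= z -> infinite_sum (fun k => A k x * B k z) (ser (fun k => A k x * B k z))).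
  { intros; eapply prod_summable; eauto. }
  assert (Hse : infinite_sum e (ser (fun k => A k x' * B k z') - ser (fun k => A k x * B k z))).
  { pose proof (is_lin _ _ 1 (-1) _ _ (Hs1 x' z' Hz') (Hs1 x z Hz0)) as L1.
    eapply is_ext; [|replace (ser (fun k => A k x' * B k z') - ser (fun k => A k x * B k z)) with
      (1 * ser (fun k => A k x' * B k z') + -1 * ser (fun k => A k x * B k z)) by ring; exact L1].
    intro k; unfold e; ring. }
  assert (Heb : forall k, Rabs (e k) <= 2 * (al k * be k)).
  { intro k. unfold e. pose proof (HBb k z' Hz'). pose proof (HBb k z Hz0).
    pose proof (HAb k x). pose proof (HAb k x'). pose proof (Hal k). pose proof (Hbe k).
    unfold Rminus. eapply Rle_trans; [apply Rabs_triang|]. rewrite Rabs_Ropp, !Rabs_mult.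
    assert (Rabs (A k x') * Rabs (B k z') <= al k * be k) by (apply Rmult_le_compat; auto; apply Rabs_pos).
    assert (Rabs (A k x) * Rabs (B k z) <= al k * be k) by (apply Rmult_le_compat; auto; apply Rabs_pos).
    lra. }
  assert (Hd2 : infinite_sum (fun k => 2 * (al k * be k)) (2 * lab)) by (apply is_scale; auto).
  pose proof (tail_bound e _ _ _ N Heb Hse Hd2) as T.
  rewrite sum_scale in T.
  assert (Hh : Rabs (sum_f_R0 e N) <= (INR N + 1) * c).
  { apply head_bound. intros k Hk. apply Hdk; auto. }
  replace ((INR N + 1) * c) with (eps / 2) in Hh by (unfold c; field; pose proof (pos_INR N); lra).
  set (V := ser (fun k => A k x' * B k z') - ser (fun k => A k x * B k z)) in *.
  replace V with ((V - sum_f_R0 e N) + sum_f_R0 e N) by ring.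
  eapply Rle_lt_trans; [apply Rabs_triang|]. lra.
Qed.
End SC.

Definition cub (p : R) := 2 * p ^ 3 + p.
Definition rr (a : R) := (1 - a) / (2 - a).

Lemma cub_lt p q : p < q -> cub p < cub q.
Proof. intro H. unfold cub. assert (0 <= p^2 + p*q + q^2) by nra. nra. Qed.

Lemma cub_le_iff p q : cub p <= cub q <-> p <= q.
Proof.
  split; intro H.
  - destruct (Rle_or_lt p q); auto. pose proof (cub_lt q p H0). lra.
  - destruct H as [H|H]; [left; apply cub_lt; auto| subst; lra].
Qed.

Lemma cub_root r : exists p, cub p = r.
Proof.
  set (f := fun p => 2 * p ^ 3 + p - r).
  assert (Hc : continuity f) by (unfold f; reg).
  set (M := Rabs r + 1).
  assert (HM : 1 <= M) by (unfold M; pose proof (Rabs_pos r); lra).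
  assert (Hr : - M < r < M) by (unfold M; unfold Rabs; destruct Rcase_abs; lra).
  destruct (IVT f (-M) M Hc ltac:(lra)) as [p [_ Hp]].
  { unfold f. assert (M <= M^3) by nra. nra. }
  { unfold f. assert (M <= M^3) by nra. nra. }
  exists p. unfold cub; unfold f in Hp; lra.
Qed.

Lemma phi_spec a : cub (phi a) = rr a.
Proof.
  unfold phi. pose proof (epsilon_spec (inhabits 0) (fun x => 2 * x ^ 3 + x = (1 - a) / (2 - a))).
  unfold cub, rr. apply H. apply cub_root.
Qed.

Lemma rr_range a : 0 <= a <= 1 -> 0 <= rr a <= 1/2.
Proof.
  intro H. unfold rr. split.
  - unfold Rdiv. apply Rmult_le_pos; [lra| apply Rlt_le, Rinv_0_lt_compat; lra].
  - apply Rmult_le_reg_r with (2 - a); [lra|]. unfold Rdiv. rewrite Rmult_assoc, Rinv_l by lra. lra.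
Qed.

Lemma phi_range a : 0 <= a <= 1 -> 0 <= phi a <= 1/2.
Proof.
  intro H. pose proof (rr_range a H). pose proof (phi_spec a).
  split.
  - apply cub_le_iff. unfold cub at 1. rewrite H1. lra.
  - apply cub_le_iff. rewrite H1. unfold cub. lra.
Qed.

Lemma rr_le_iff a C : 0 <= a <= 1 -> (rr a <= C <-> 1 - a - C * (2 - a) <= 0).
Proof.
  intro H. unfold rr. split; intro H1.
  - apply Rmult_le_compat_r with (r := 2 - a) in H1; [|lra].
    unfold Rdiv in H1. rewrite Rmult_assoc, Rinv_l in H1 by lra. lra.
  - apply Rmult_le_reg_r with (2 - a); [lra|]. unfold Rdiv. rewrite Rmult_assoc, Rinv_l by lra. lra.
Qed.

Lemma rr_ge_iff a C : 0 <= a <= 1 -> (C <= rr a <-> C * (2 - a) - (1 - a) <= 0).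
Proof.
  intro H. unfold rr. split; intro H1.
  - apply Rmult_le_compat_r with (r := 2 - a) in H1; [|lra].
    unfold Rdiv in H1. rewrite Rmult_assoc, Rinv_l in H1 by lra. lra.
  - apply Rmult_le_reg_r with (2 - a); [lra|]. unfold Rdiv. rewrite Rmult_assoc, Rinv_l by lra. lra.
Qed.

Lemma rr_anti a b : 0 <= a <= b -> b <= 1 -> rr b <= rr a.
Proof.
  intros H1 H2. apply rr_le_iff; [lra|]. unfold rr.
  replace (1 - b - (1 - a) / (2 - a) * (2 - b)) with ((a - b) / (2 - a)) by (field; lra).
  apply Rmult_le_reg_r with (2 - a); [lra|]. unfold Rdiv. rewrite Rmult_assoc, Rinv_l by lra. lra.
Qed.

Lemma phi_anti a b : 0 <= a <= b -> b <= 1 -> phi b <= phi a.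
Proof. intros. apply cub_le_iff. rewrite !phi_spec. apply rr_anti; auto. Qed.

Lemma phi_le_iff a y : phi a <= y <-> rr a <= cub y.
Proof. rewrite <- phi_spec. symmetry. apply cub_le_iff. Qed.

Lemma phi_ge_iff a y : y <= phi a <-> cub y <= rr a.
Proof. rewrite <- phi_spec. symmetry. apply cub_le_iff. Qed.

Definition closedP (S : R -> Prop) := forall m, (forall d, 0 < d -> exists s, S s /\ Rabs (s - m) < d) -> S m.

Lemma closed_closedP S : closed_set S -> closedP S.
Proof.
  intros H m Hm. apply NNPP. intro Hn. destruct (H m Hn) as [d Hd].
  destruct (Hm d (cond_pos d)) as [s [Hs Hsd]]. apply (Hd s); auto.
Qed.

Lemma affine_closedP (S : R -> Prop) p q : closedP S -> closedP (fun a => S a /\ p + q * a <= 0).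
Proof.
  intros HS m Hm. split.
  - apply HS. intros d Hd. destruct (Hm d Hd) as [s [[Hs _] H]]. eauto.
  - apply Rnot_lt_le. intro Hpos.
    destruct (Hm ((p + q * m) / (Rabs q + 1))) as [s [[_ Hs] Hsd]].
    { apply Rdiv_lt_0_compat; auto. pose proof (Rabs_pos q); lra. }
    assert (Hq : Rabs (q * (m - s)) <= Rabs q * ((p + q * m) / (Rabs q + 1))).
    { rewrite Rabs_mult. apply Rmult_le_compat_l; [apply Rabs_pos|].
      rewrite Rabs_minus_sym. lra. }
    assert (Rabs q * ((p + q * m) / (Rabs q + 1)) < p + q * m).
    { apply Rlt_le_trans with ((Rabs q + 1) * ((p + q * m) / (Rabs q + 1))).
      - apply Rmult_lt_compat_r; [apply Rdiv_lt_0_compat|]; pose proof (Rabs_pos q); lra.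
      - right; field; pose proof (Rabs_pos q); lra. }
    assert (q * (m - s) <= Rabs (q * (m - s))) by apply RRle_abs. nra.
Qed.

Lemma closed_min (S : R -> Prop) : closedP S -> (exists a, S a) -> (forall a, S a -> 0 <= a) ->
  exists m, S m /\ forall a, S a -> m <= a.
Proof.
  intros HS [a0 Ha0] Hlb.
  destruct (completeness (fun x => S (- x))) as [s [Hub Hl]].
  { exists 0. intros x Hx. specialize (Hlb _ Hx). lra. }
  { exists (- a0). rewrite Ropp_involutive; auto. }
  exists (- s). split.
  - apply HS. intros d Hd. apply NNPP. intro Hn.
    assert (is_upper_bound (fun x => S (- x)) (s - d)).
    { intros x Hx. apply Rnot_lt_le. intro Hlt. apply Hn. exists (- x). split; auto.
      specialize (Hub x Hx). unfold Rabs; destruct Rcase_abs; lra. }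
    specialize (Hl _ H). lra.
  - intros a Ha. assert (S (- - a)) by (rewrite Ropp_involutive; auto).
    specialize (Hub _ H). lra.
Qed.

Lemma closed_max (S : R -> Prop) : closedP S -> (exists a, S a) -> (forall a, S a -> a <= 1) ->
  exists m, S m /\ forall a, S a -> a <= m.
Proof.
  intros HS [a0 Ha0] Hub.
  destruct (closed_min (fun x => S (1 - x))) as [m [Hm Hmin]].
  - intros m Hm. apply HS. intros d Hd. destruct (Hm d Hd) as [s [Hs Hsd]].
    exists (1 - s). split; auto. replace (1 - s - (1 - m)) with (- (s - m)) by ring. rewrite Rabs_Ropp; auto.
  - exists (1 - a0). replace (1 - (1 - a0)) with a0 by ring; auto.
  - intros a Ha. specialize (Hub _ Ha). lra.
  - exists (1 - m). split; auto. intros a Ha. assert (S (1 - (1 - a))) by (replace (1 - (1 - a)) with a by ring; auto).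
    specialize (Hmin _ H). lra.
Qed.

Section AB.
Variables (F : nat -> R -> Prop) (n : nat).
Hypothesis hcl : closed_set (F n).
Hypothesis hsub : forall a, F n a -> 0 <= a <= 1.

Lemma a_exists y : exists v, E F n v /\ v <= y /\ forall w, E F n w -> w <= y -> w <= v.
Proof.
  destruct (Rle_or_lt y (-1)) as [Hy|Hy].
  { exists y. split; [left; auto|split; [lra| auto]]. }
  destruct (Rle_or_lt 2 y) as [Hy2|Hy2].
  { exists y. split; [right; left; auto|split; [lra| auto]]. }
  set (T := fun a => F n a /\ (1 - cub y * 2) + (cub y - 1) * a <= 0).
  assert (HT : forall a, T a <-> F n a /\ phi a <= y).
  { intro a. unfold T. rewrite phi_le_iff. split; intros [H1 H2]; split; auto;
    pose proof (rr_le_iff a (cub y) (hsub a H1)) as HR.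
    - apply HR; lra.
    - apply HR in H2; lra. }
  destruct (classic (exists a, T a)) as [Hex|Hnex].
  - destruct (closed_min T) as [m [Hm Hmin]]; auto.
    { apply affine_closedP. apply closed_closedP; auto. }
    { intros a [Ha _]. apply hsub; auto. }
    exists (phi m). apply HT in Hm. destruct Hm as [Hm1 Hm2].
    split; [right; right; eauto| split; auto].
    intros w [Hw|[Hw|[a [Ha ->]]]] Hwy.
    + pose proof (phi_range m (hsub m Hm1)); lra.
    + lra.
    + apply phi_anti; [split; [apply hsub; auto|]| apply hsub; auto].
      apply Hmin. apply HT; auto.
  - exists (-1). split; [left; lra| split; [lra|]].
    intros w [Hw|[Hw|[a [Ha ->]]]] Hwy; auto; [lra|].
    exfalso. apply Hnex. exists a. apply HT; auto.
Qed.

Lemma b_exists y : exists v, E F n v /\ y <= v /\ forall w, E F n w -> y <= w -> v <= w.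
Proof.
  destruct (Rle_or_lt y (-1)) as [Hy|Hy].
  { exists y. split; [left; auto|split; [lra| auto]]. }
  destruct (Rle_or_lt 2 y) as [Hy2|Hy2].
  { exists y. split; [right; left; auto|split; [lra| auto]]. }
  set (T := fun a => F n a /\ (cub y * 2 - 1) + (1 - cub y) * a <= 0).
  assert (HT : forall a, T a <-> F n a /\ y <= phi a).
  { intro a. unfold T. rewrite phi_ge_iff. split; intros [H1 H2]; split; auto;
    pose proof (rr_ge_iff a (cub y) (hsub a H1)) as HR.
    - apply HR; lra.
    - apply HR in H2; lra. }
  destruct (classic (exists a, T a)) as [Hex|Hnex].
  - destruct (closed_max T) as [m [Hm Hmax]]; auto.
    { apply affine_closedP. apply closed_closedP; auto. }
    { intros a [Ha _]. apply hsub; auto. }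
    exists (phi m). apply HT in Hm. destruct Hm as [Hm1 Hm2].
    split; [right; right; eauto| split; auto].
    intros w [Hw|[Hw|[a [Ha ->]]]] Hwy.
    + lra.
    + pose proof (phi_range m (hsub m Hm1)); lra.
    + apply phi_anti; [split; [apply hsub; auto|]| apply hsub; auto].
      apply Hmax. apply HT; auto.
  - exists 2. split; [right; left; lra| split; [lra|]].
    intros w [Hw|[Hw|[a [Ha ->]]]] Hwy; auto; [lra|].
    exfalso. apply Hnex. exists a. apply HT; auto.
Qed.

Lemma a_spec y : E F n (a_ F n y) /\ a_ F n y <= y /\ forall w, E F n w -> w <= y -> w <= a_ F n y.
Proof. unfold a_. apply epsilon_spec. apply a_exists. Qed.

Lemma b_spec y : E F n (b_ F n y) /\ y <= b_ F n y /\ forall w, E F n w -> y <= w -> b_ F n y <= w.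
Proof. unfold b_. apply epsilon_spec. apply b_exists. Qed.

Definition sA y := y - a_ F n y.
Definition tB y := b_ F n y - y.

Lemma E_ab y : E F n y -> a_ F n y = y /\ b_ F n y = y.
Proof.
  intro H. destruct (a_spec y) as [_ [H1 H2]]. destruct (b_spec y) as [_ [H3 H4]].
  specialize (H2 y H (Rle_refl _)). specialize (H4 y H (Rle_refl _)). lra.
Qed.

Lemma st_range y : 0 <= sA y /\ 0 <= tB y /\ sA y + tB y <= 3.
Proof.
  unfold sA, tB. destruct (classic (E F n y)) as [H|H].
  - destruct (E_ab y H). lra.
  - destruct (a_spec y) as [_ [H1 H2]]. destruct (b_spec y) as [_ [H3 H4]].
    assert (-1 < y < 2). { split; apply Rnot_le_lt; intro; apply H; [left|right;left]; lra. }
    specialize (H2 (-1) ltac:(left; lra) ltac:(lra)). specialize (H4 2 ltac:(right; left; lra) ltac:(lra)). lra.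
Qed.

Lemma st_near y0 y : E F n y0 -> sA y <= Rabs (y - y0) \/ tB y <= Rabs (y - y0).
Proof.
  intro H. unfold sA, tB. destruct (Rle_or_lt y0 y) as [Hle|Hlt].
  - left. destruct (a_spec y) as [_ [_ H2]]. specialize (H2 y0 H Hle).
    rewrite Rabs_right; lra.
  - right. destruct (b_spec y) as [_ [_ H2]]. specialize (H2 y0 H (Rlt_le _ _ Hlt)).
    rewrite Rabs_left; lra.
Qed.

Lemma notE_local y : ~ E F n y -> exists d, 0 < d /\ forall y', Rabs (y' - y) < d ->
  a_ F n y' = a_ F n y /\ b_ F n y' = b_ F n y.
Proof.
  intro H. destruct (a_spec y) as [Ha1 [Ha2 Ha3]]. destruct (b_spec y) as [Hb1 [Hb2 Hb3]].
  assert (Hay : a_ F n y < y) by (destruct Ha2; auto; subst; exfalso; apply H; rewrite <- H0; auto).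
  assert (Hby : y < b_ F n y) by (destruct Hb2; auto; exfalso; apply H; rewrite H0; auto).
  exists (Rmin (y - a_ F n y) (b_ F n y - y)). split; [apply Rmin_pos; lra|].
  intros y' Hy'. apply Rabs_def2 in Hy'. destruct Hy' as [Hy1 Hy2].
  pose proof (Rmin_l (y - a_ F n y) (b_ F n y - y)). pose proof (Rmin_r (y - a_ F n y) (b_ F n y - y)).
  destruct (a_spec y') as [Ha1' [Ha2' Ha3']]. destruct (b_spec y') as [Hb1' [Hb2' Hb3']].
  split.
  - assert (a_ F n y <= a_ F n y') by (apply Ha3'; auto; lra).
    assert (a_ F n y' <= a_ F n y).
    { apply Ha3; auto. apply Rnot_lt_le. intro. specialize (Hb3 _ Ha1' ltac:(lra)). lra. }
    lra.
  - assert (b_ F n y' <= b_ F n y) by (apply Hb3'; auto; lra).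
    assert (b_ F n y <= b_ F n y').
    { apply Hb3; auto. apply Rnot_lt_le. intro. specialize (Ha3 _ Hb1' ltac:(lra)). lra. }
    lra.
Qed.

Lemma g_eq y : g_ F n y = sA y ^ 3 * tB y ^ 3.
Proof. reflexivity. Qed.

Lemma g_zero_iff y : g_ F n y = 0 <-> E F n y.
Proof.
  split; intro H.
  - rewrite g_eq in H. apply Rmult_integral in H.
    assert (P0 : forall z, z ^ 3 = 0 -> z = 0) by (intros z Hz; destruct (Req_dec z 0); auto; exfalso; apply (pow_nonzero z 3); auto).
    destruct H as [H|H];
    apply P0 in H; unfold sA, tB in H.
    + destruct (a_spec y) as [Ha _]. replace y with (a_ F n y) by lra; auto.
    + destruct (b_spec y) as [Hb _]. replace y with (b_ F n y) by lra; auto.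
  - rewrite g_eq. unfold sA, tB. destruct (E_ab y H) as [-> ->]. ring.
Qed.

Lemma g_nonneg y : 0 <= g_ F n y.
Proof. rewrite g_eq. destruct (st_range y) as [H1 [H2 _]]. apply Rmult_le_pos; apply pow_le; auto. Qed.
End AB.

Lemma dpl_eq f g x l l' : derivable_pt_lim f x l -> (forall y, f y = g y) -> l = l' ->
  derivable_pt_lim g x l'.
Proof.
  intros H E <-. intros e He. destruct (H e He) as [d Hd]. exists d. intros h Hh Hl.
  rewrite <- !E. auto.
Qed.

Definition mono a0 b0 i j y := (y - a0) ^ i * (b0 - y) ^ j.

Lemma mono_deriv a0 b0 i j x : derivable_pt_lim (mono a0 b0 i j) x
  (INR i * (x - a0) ^ pred i * (b0 - x) ^ j - INR j * (x - a0) ^ i * (b0 - x) ^ pred j).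
Proof.
  assert (H1 : derivable_pt_lim (fun y => (y - a0) ^ i) x (INR i * (x - a0) ^ pred i * 1)).
  { eapply dpl_eq with (f := comp (fun y => y ^ i) (fun y => y - a0)); [|reflexivity|reflexivity].
    apply derivable_pt_lim_comp.
    - apply dpl_eq with (f := minus_fct id (fct_cte a0)) (l := 1 - 0); [| intro; reflexivity| ring].
      apply derivable_pt_lim_minus; [apply derivable_pt_lim_id| apply derivable_pt_lim_const].
    - apply derivable_pt_lim_pow. }
  assert (H2 : derivable_pt_lim (fun y => (b0 - y) ^ j) x (INR j * (b0 - x) ^ pred j * (-1))).
  { eapply dpl_eq with (f := comp (fun y => y ^ j) (fun y => b0 - y)); [|reflexivity|reflexivity].
    apply derivable_pt_lim_comp.
    - apply dpl_eq with (f := minus_fct (fct_cte b0) id) (l := 0 - 1); [| intro; reflexivity| ring].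
      apply derivable_pt_lim_minus; [apply derivable_pt_lim_const| apply derivable_pt_lim_id].
    - apply derivable_pt_lim_pow. }
  eapply dpl_eq with (f := mult_fct (fun y => (y - a0) ^ i) (fun y => (b0 - y) ^ j)).
  apply derivable_pt_lim_mult; [exact H1| exact H2]. intro; reflexivity. cbv beta. ring.
Qed.

Lemma dpl_lin f g a b x lf lg : derivable_pt_lim f x lf -> derivable_pt_lim g x lg ->
  derivable_pt_lim (fun y => a * f y + b * g y) x (a * lf + b * lg).
Proof.
  intros Hf Hg. eapply dpl_eq with (f := plus_fct (mult_real_fct a f) (mult_real_fct b g)); [| intro; reflexivity| reflexivity].
  apply derivable_pt_lim_plus; apply derivable_pt_lim_scal; auto.
Qed.

Definition G1 F n y := 3 * sA F n y ^ 2 * tB F n y ^ 2 * (tB F n y - sA F n y).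
Definition G2 F n y := 6 * sA F n y * tB F n y * (tB F n y ^ 2 - 3 * sA F n y * tB F n y + sA F n y ^ 2).

Lemma pow_small m u : 0 <= m <= Rabs u -> Rabs u < 1 -> m^3 <= u^2 /\ m^2 <= u^2.
Proof.
  intros H1 H2. assert (Hu : u^2 = Rabs u * Rabs u) by (rewrite <- Rabs_mult; rewrite Rabs_right; [ring| nra]).
  rewrite Hu. split; nra.
Qed.

Section GD.
Variables (F : nat -> R -> Prop) (n : nat).
Hypothesis hcl : closed_set (F n).
Hypothesis hsub : forall a, F n a -> 0 <= a <= 1.

Lemma local_st x : ~ E F n x -> exists d, 0 < d /\ forall y, Rabs (y - x) < d ->
  sA F n y = y - a_ F n x /\ tB F n y = b_ F n x - y.
Proof.
  intro H. destruct (notE_local F n hcl hsub x H) as [d [Hd Hl]]. exists d; split; auto.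
  intros y Hy. destruct (Hl y Hy) as [H1 H2]. unfold sA, tB. rewrite H1, H2; auto.
Qed.

Lemma min_bound x y : E F n x -> exists m, 0 <= m <= Rabs (y - x) /\
  ((sA F n y = m /\ 0 <= tB F n y <= 3) \/ (tB F n y = m /\ 0 <= sA F n y <= 3)).
Proof.
  intro H. destruct (st_range F n hcl hsub y) as [Hs [Ht Hst]].
  destruct (st_near F n hcl hsub x y H) as [Hm|Hm].
  - exists (sA F n y). split; [lra| left; split; auto; lra].
  - exists (tB F n y). split; [lra| right; split; auto; lra].
Qed.

Lemma g_deriv x : derivable_pt_lim (g_ F n) x (G1 F n x).
Proof.
  destruct (classic (E F n x)) as [HE|HE].
  - unfold G1, sA, tB. destruct (E_ab F n hcl hsub x HE) as [-> ->].
    replace (3 * (x - x) ^ 2 * (x - x) ^ 2 * (x - x - (x - x))) with 0 by ring.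
    apply deriv_zero_bound with 27; [apply g_zero_iff; auto| lra|].
    intros y Hy. rewrite g_eq. destruct (min_bound x y HE) as [m [Hm [[H1 H2]|[H1 H2]]]];
    rewrite H1; rewrite Rabs_mult, <- !RPow_abs; rewrite (Rabs_right m) by lra.
    + assert (m ^ 3 <= (y - x) ^ 2) by (apply (proj1 (pow_small m (y - x) Hm Hy))).
      rewrite (Rabs_right (tB F n y)) by lra.
      assert (tB F n y ^ 3 <= 27) by nra. assert (0 <= m^3) by (apply pow_le; lra). nra.
    + assert (m ^ 3 <= (y - x) ^ 2) by (apply (proj1 (pow_small m (y - x) Hm Hy))).
      rewrite (Rabs_right (sA F n y)) by lra.
      assert (sA F n y ^ 3 <= 27) by nra. assert (0 <= m^3) by (apply pow_le; lra). nra.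
  - destruct (local_st x HE) as [d [Hd Hl]].
    apply deriv_local with (mono (a_ F n x) (b_ F n x) 3 3).
    { exists d. split; auto. intros y Hy. rewrite g_eq. destruct (Hl y Hy) as [-> ->]. reflexivity. }
    eapply dpl_eq; [apply mono_deriv| intro; reflexivity|].
    destruct (Hl x ltac:(rewrite Rminus_diag, Rabs_R0; lra)) as [H1 H2].
    unfold G1. rewrite H1, H2. simpl. ring.
Qed.

Lemma G1_deriv x : derivable_pt_lim (G1 F n) x (G2 F n x).
Proof.
  destruct (classic (E F n x)) as [HE|HE].
  - unfold G2 at 1, sA, tB. destruct (E_ab F n hcl hsub x HE) as [-> ->].
    replace (6 * (x - x) * (x - x) * ((x - x) ^ 2 - 3 * (x - x) * (x - x) + (x - x) ^ 2)) with 0 by ring.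
    apply deriv_zero_bound with 81; [|lra|].
    { unfold G1, sA, tB. destruct (E_ab F n hcl hsub x HE) as [-> ->]. ring. }
    intros y Hy. unfold G1. destruct (min_bound x y HE) as [m [Hm [[H1 H2]|[H1 H2]]]];
    rewrite H1.
    + assert (m ^ 2 <= (y - x) ^ 2) by (apply (proj2 (pow_small m (y - x) Hm Hy))).
      set (t := tB F n y) in *.
      replace (3 * m ^ 2 * t ^ 2 * (t - m)) with (m^2 * (3 * t^2 * (t - m))) by ring.
      rewrite Rabs_mult, Rabs_right by (apply Rle_ge, pow2_ge_0).
      assert (Rabs (3 * t ^ 2 * (t - m)) <= 81).
      { assert (m <= 1) by lra. assert (0 <= t^2 <= 9) by nra.
        apply Rabs_le. split; nra. }
      assert (0 <= m^2) by nra. pose proof (Rabs_pos (3 * t ^ 2 * (t - m))). nra.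
    + assert (m ^ 2 <= (y - x) ^ 2) by (apply (proj2 (pow_small m (y - x) Hm Hy))).
      set (s := sA F n y) in *.
      replace (3 * s ^ 2 * m ^ 2 * (m - s)) with (m^2 * (3 * s^2 * (m - s))) by ring.
      rewrite Rabs_mult, Rabs_right by (apply Rle_ge, pow2_ge_0).
      assert (Rabs (3 * s ^ 2 * (m - s)) <= 81).
      { assert (m <= 1) by lra. assert (0 <= s^2 <= 9) by nra.
        apply Rabs_le. split; nra. }
      assert (0 <= m^2) by nra. pose proof (Rabs_pos (3 * s ^ 2 * (m - s))). nra.
  - destruct (local_st x HE) as [d [Hd Hl]].
    apply deriv_local with (fun y => 3 * mono (a_ F n x) (b_ F n x) 2 3 y + (-3) * mono (a_ F n x) (b_ F n x) 3 2 y).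
    { exists d. split; auto. intros y Hy. unfold G1. destruct (Hl y Hy) as [-> ->]. unfold mono. ring. }
    eapply dpl_eq; [apply dpl_lin; apply mono_deriv| intro; reflexivity|].
    destruct (Hl x ltac:(rewrite Rminus_diag, Rabs_R0; lra)) as [H1 H2].
    unfold G2. rewrite H1, H2. simpl. ring.
Qed.

Lemma G2_ctn x : ctn (G2 F n) x.
Proof.
  destruct (classic (E F n x)) as [HE|HE].
  - intros e He.
    assert (HG : G2 F n x = 0) by (unfold G2, sA, tB; destruct (E_ab F n hcl hsub x HE) as [-> ->]; ring).
    exists (Rmin 1 (e / 2000)). split; [apply Rmin_pos; lra|].
    intros y Hy. rewrite HG, Rminus_0_r.
    assert (Hy1 : Rabs (y - x) < 1) by (eapply Rlt_le_trans; [exact Hy| apply Rmin_l]).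
    assert (Hy2 : Rabs (y - x) < e / 2000) by (eapply Rlt_le_trans; [exact Hy| apply Rmin_r]).
    destruct (st_range F n hcl hsub y) as [Hs [Ht Hst]].
    unfold G2. destruct (min_bound x y HE) as [m [Hm [[H1 H2]|[H1 H2]]]]; rewrite H1.
    + set (t := tB F n y) in *.
      apply Rle_lt_trans with (2000 * m); [|lra].
      replace (6 * m * t * (t ^ 2 - 3 * m * t + m ^ 2)) with (m * (6 * t * (t ^ 2 - 3 * m * t + m ^ 2))) by ring.
      assert (m <= 1) by lra. assert (t <= 3) by lra.
      assert (-30 <= t ^ 2 - 3 * m * t + m ^ 2 <= 30) by nra.
      assert (-2000 <= 6 * t * (t ^ 2 - 3 * m * t + m ^ 2) <= 2000) by nra.
      apply Rabs_le. split; nra.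
    + set (s := sA F n y) in *.
      apply Rle_lt_trans with (2000 * m); [|lra].
      replace (6 * s * m * (m ^ 2 - 3 * s * m + s ^ 2)) with (m * (6 * s * (m ^ 2 - 3 * s * m + s ^ 2))) by ring.
      assert (m <= 1) by lra. assert (s <= 3) by lra.
      assert (-30 <= m ^ 2 - 3 * s * m + s ^ 2 <= 30) by nra.
      assert (-2000 <= 6 * s * (m ^ 2 - 3 * s * m + s ^ 2) <= 2000) by nra.
      apply Rabs_le. split; nra.
  - destruct (local_st x HE) as [d [Hd Hl]].
    apply dpl_ctn with (6 * (INR 1 * (x - a_ F n x) ^ 0 * (b_ F n x - x) ^ 3 - INR 3 * (x - a_ F n x) ^ 1 * (b_ F n x - x) ^ 2)
      + (-18) * (INR 2 * (x - a_ F n x) ^ 1 * (b_ F n x - x) ^ 2 - INR 2 * (x - a_ F n x) ^ 2 * (b_ F n x - x) ^ 1)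
      + 6 * (INR 3 * (x - a_ F n x) ^ 2 * (b_ F n x - x) ^ 1 - INR 1 * (x - a_ F n x) ^ 3 * (b_ F n x - x) ^ 0)).
    apply deriv_local with (fun y => (6 * mono (a_ F n x) (b_ F n x) 1 3 y + (-18) * mono (a_ F n x) (b_ F n x) 2 2 y)
       + 6 * mono (a_ F n x) (b_ F n x) 3 1 y).
    { exists d. split; auto. intros y Hy. unfold G2. destruct (Hl y Hy) as [-> ->]. unfold mono. ring. }
    eapply dpl_eq with (f := fun y => 1 * (6 * mono (a_ F n x) (b_ F n x) 1 3 y + (-18) * mono (a_ F n x) (b_ F n x) 2 2 y)
       + 6 * mono (a_ F n x) (b_ F n x) 3 1 y) (l := 1 * (6 * (INR 1 * (x - a_ F n x) ^ 0 * (b_ F n x - x) ^ 3 - INR 3 * (x - a_ F n x) ^ 1 * (b_ F n x - x) ^ 2)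
      + (-18) * (INR 2 * (x - a_ F n x) ^ 1 * (b_ F n x - x) ^ 2 - INR 2 * (x - a_ F n x) ^ 2 * (b_ F n x - x) ^ 1))
      + 6 * (INR 3 * (x - a_ F n x) ^ 2 * (b_ F n x - x) ^ 1 - INR 1 * (x - a_ F n x) ^ 3 * (b_ F n x - x) ^ 0)).
    + apply dpl_lin; [apply dpl_lin|]; apply mono_deriv.
    + intro; ring.
    + ring.
Qed.

Lemma g_bounds y : Rabs (g_ F n y) <= 3000 /\ Rabs (G1 F n y) <= 3000 /\ Rabs (G2 F n y) <= 3000.
Proof.
  destruct (st_range F n hcl hsub y) as [Hs [Ht Hst]]. rewrite g_eq. unfold G1, G2.
  set (s := sA F n y) in *. set (t := tB F n y) in *.
  assert (s <= 3) by lra. assert (t <= 3) by lra.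
  assert (0 <= s * t <= 9) by nra.
  assert (E3 : s^3 * t^3 = (s*t)*((s*t)*(s*t))) by ring.
  assert (0 <= (s*t)*(s*t) <= 81) by nra.
  assert (0 <= s^3 * t^3 <= 729) by (rewrite E3; nra).
  split; [apply Rabs_le; lra|]. split.
  - apply Rabs_le. replace (3 * s ^ 2 * t ^ 2 * (t - s)) with (3 * (s*t)*(s*t) * (t - s)) by ring.
    split; nra.
  - apply Rabs_le. replace (6 * s * t * (t ^ 2 - 3 * s * t + s ^ 2)) with (6 * (s*t) * (t ^ 2 - 3 * s * t + s ^ 2)) by ring.
    assert (-27 <= t ^ 2 - 3 * s * t + s ^ 2 <= 18) by nra. split; nra.
Qed.
End GD.

Definition hw (n : nat) z := Rmax (INR n - z) 0.
Definition H1 n z := -3 * hw n z ^ 2.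
Definition H2 n z := 6 * hw n z.

Lemma hw_pow_deriv n k z : (2 <= k)%nat ->
  derivable_pt_lim (fun y => hw n y ^ k) z (- INR k * hw n z ^ (pred k)).
Proof.
  intro Hk. unfold hw. set (N := INR n).
  destruct (Rtotal_order z N) as [Hlt|[Heq|Hgt]].
  - apply deriv_local with (mono 0 N 0 k).
    { exists (N - z). split; [lra|]. intros y Hy. apply Rabs_def2 in Hy. unfold mono.
      rewrite Rmax_left by lra. simpl; ring. }
    eapply dpl_eq; [apply mono_deriv| intro; reflexivity|]. rewrite Rmax_left by lra. simpl. ring.
  - subst z. rewrite Rminus_diag, Rmax_right by lra. rewrite pow_i by lia. rewrite Rmult_0_r.
    apply deriv_zero_bound with 1; [rewrite Rminus_diag, Rmax_right by lra; apply pow_i; lia| lra|].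
    intros y Hy. rewrite <- RPow_abs.
    assert (Hw : 0 <= Rabs (Rmax (N - y) 0) <= Rabs (y - N)).
    { split; [apply Rabs_pos|]. unfold Rmax; destruct Rle_dec; unfold Rabs; repeat destruct Rcase_abs; lra. }
    assert (Rabs (Rmax (N - y) 0) ^ k <= Rabs (Rmax (N - y) 0) ^ 2).
    { replace k with (2 + (k - 2))%nat by lia. rewrite pow_add.
      assert (Rabs (Rmax (N - y) 0) ^ (k - 2) <= 1) by (rewrite <- (pow1 (k - 2)); apply pow_incr; lra).
      assert (0 <= Rabs (Rmax (N - y) 0) ^ 2) by (apply pow_le; lra). nra. }
    assert (Rabs (Rmax (N - y) 0) ^ 2 <= (y - N) ^ 2).
    { rewrite <- (pow2_abs (y - N)). apply pow_incr. lra. }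
    lra.
  - apply deriv_local with (fun _ => 0).
    { exists (z - N). split; [lra|]. intros y Hy. apply Rabs_def2 in Hy.
      rewrite Rmax_right by lra. apply pow_i; lia. }
    eapply dpl_eq; [apply derivable_pt_lim_const| intro; reflexivity|].
    rewrite Rmax_right by lra. rewrite pow_i by lia. ring.
Qed.

Lemma h_deriv n z : derivable_pt_lim (h_ n) z (H1 n z).
Proof.
  eapply dpl_eq; [apply (hw_pow_deriv n 3 z); lia| intro; reflexivity|]. unfold H1. simpl. ring.
Qed.

Lemma H1_deriv n z : derivable_pt_lim (H1 n) z (H2 n z).
Proof.
  unfold H1. eapply dpl_eq; [apply (derivable_pt_lim_scal (fun y => hw n y ^ 2) (-3)); apply (hw_pow_deriv n 2 z); lia
   | intro; reflexivity|]. unfold H2. simpl. ring.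
Qed.

Lemma H2_ctn n z : ctn (H2 n) z.
Proof.
  intros e He. exists (e / 6). split; [lra|]. intros y Hy. unfold H2, hw.
  replace (6 * Rmax (INR n - y) 0 - 6 * Rmax (INR n - z) 0) with (6 * (Rmax (INR n - y) 0 - Rmax (INR n - z) 0)) by ring.
  rewrite Rabs_mult, Rabs_right by lra.
  assert (Rabs (Rmax (INR n - y) 0 - Rmax (INR n - z) 0) <= Rabs (y - z)).
  { unfold Rmax; repeat destruct Rle_dec; unfold Rabs; repeat destruct Rcase_abs; lra. }
  lra.
Qed.

Lemma h_bounds n z : (1 <= n)%nat -> 0 <= z ->
  Rabs (h_ n z) <= 6 * INR n ^ 3 /\ Rabs (H1 n z) <= 6 * INR n ^ 3 /\ Rabs (H2 n z) <= 6 * INR n ^ 3.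
Proof.
  intros Hn Hz. assert (HN : 1 <= INR n) by (apply (le_INR 1); auto).
  assert (Hw : 0 <= hw n z <= INR n) by (unfold hw, Rmax; destruct Rle_dec; lra).
  unfold h_, H1, H2. fold (hw n z). set (w := hw n z) in *. set (N := INR n) in *.
  assert (0 <= w^2 <= N^2) by (split; [apply pow_le; lra| apply pow_incr; lra]).
  assert (N^2 <= N^3) by (simpl; nra).
  assert (0 <= w^3 <= N^3) by (split; [apply pow_le; lra| apply pow_incr; lra]).
  assert (N <= N^3) by (simpl; nra).
  split; [|split]; apply Rabs_le; split; nra.
Qed.

Lemma h_nonneg n z : 0 <= h_ n z.
Proof. unfold h_. apply pow_le. apply Rmax_r. Qed.

Lemma key_ineq s t w N X Y : 0 <= s -> 0 <= t -> s + t <= 3 -> 0 <= w <= N ->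
  0 <= 2187 * N ^ 3 * X ^ 2 + X ^ 2 * (6 * s * t * (t ^ 2 - 3 * s * t + s ^ 2)) * w ^ 3
     + 2 * X * Y * (3 * s ^ 2 * t ^ 2 * (t - s)) * (-3 * w ^ 2) + Y ^ 2 * (s ^ 3 * t ^ 3) * (6 * w).
Proof.
  intros Hs Ht Hst Hw.
  set (p := s * t).
  assert (Hp : 0 <= p <= 9/4).
  { unfold p. assert (0 <= s*(3-s-t)) by (apply Rmult_le_pos; lra). assert (0 <= t*(3-s-t)) by (apply Rmult_le_pos; lra).
    assert (0 <= (s-t)*(s-t)) by (apply Rle_0_sqr). split. apply Rmult_le_pos; lra. nra. }
  assert (Hs2 : 0 <= (s + t)^2 <= 9).
  { split; [nra|]. assert (0 <= s*(3-s-t)) by (apply Rmult_le_pos; lra). assert (0 <= t*(3-s-t)) by (apply Rmult_le_pos; lra). nra. }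
  set (A := 2187 + 6 * s * t * (t ^ 2 - 3 * s * t + s ^ 2)).
  set (B := 18 * s ^ 2 * t ^ 2 * (t - s)).
  set (C := 6 * s ^ 3 * t ^ 3).
  assert (HA : 1000 <= A).
  { unfold A. replace (6 * s * t * (t ^ 2 - 3 * s * t + s ^ 2)) with (6 * p * ((s + t)^2 - 5 * p)) by (unfold p; ring).
    set (q := (s+t)^2) in *. assert (0 <= p * q) by (apply Rmult_le_pos; lra).
    assert (p * p <= 81/16) by (apply Rle_trans with (9/4*(9/4)); [apply Rmult_le_compat; lra| lra]).
    nra. }
  assert (HD : 0 <= 4 * A * C - B ^ 2).
  { replace (4 * A * C - B ^ 2) with (p ^ 3 * (24 * A - 324 * p * (t - s)^2)) by (unfold A, B, C, p; ring).
    apply Rmult_le_pos; [apply pow_le; lra|].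
    unfold A. replace (6 * s * t * (t ^ 2 - 3 * s * t + s ^ 2)) with (6 * p * ((s + t)^2 - 5 * p)) by (unfold p; ring).
    replace ((t - s)^2) with ((s + t)^2 - 4 * p) by (unfold p; ring).
    set (q := (s+t)^2) in *. assert (p * q <= 9/4 * 9) by (apply Rmult_le_compat; lra).
    assert (0 <= p * p) by nra. nra. }
  set (V := w * X).
  assert (HQ : 0 <= A * V ^ 2 - B * V * Y + C * Y ^ 2).
  { assert (0 <= 4 * A * (A * V ^ 2 - B * V * Y + C * Y ^ 2)).
    { replace (4 * A * (A * V ^ 2 - B * V * Y + C * Y ^ 2)) with ((2 * A * V - B * Y)^2 + (4 * A * C - B^2) * Y^2) by ring.
      apply Rplus_le_le_0_compat; [apply pow2_ge_0| apply Rmult_le_pos; [lra| apply pow2_ge_0]]. }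
    set (Q := A * V ^ 2 - B * V * Y + C * Y ^ 2) in *.
    apply Rmult_le_reg_l with (4 * A); [lra|]. lra. }
  assert (HN : w ^ 3 <= N ^ 3) by (apply pow_incr; lra).
  assert (0 <= X^2) by apply pow2_ge_0.
  assert (E : X ^ 2 * (6 * s * t * (t ^ 2 - 3 * s * t + s ^ 2)) * w ^ 3
     + 2 * X * Y * (3 * s ^ 2 * t ^ 2 * (t - s)) * (-3 * w ^ 2) + Y ^ 2 * (s ^ 3 * t ^ 3) * (6 * w)
     = w * (A * V ^ 2 - B * V * Y + C * Y ^ 2) - 2187 * w^3 * X^2) by (unfold A, B, C, V; ring).
  rewrite Rplus_assoc, Rplus_assoc, <- (Rplus_assoc (X ^ 2 * _ * w ^ 3)), E.
  assert (0 <= w * (A * V ^ 2 - B * V * Y + C * Y ^ 2)) by (apply Rmult_le_pos; lra).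
  assert (2187 * w ^ 3 * X ^ 2 <= 2187 * N ^ 3 * X ^ 2) by (apply Rmult_le_compat_r; lra).
  lra.
Qed.

Lemma convex_1d psi psi1 psi2 :
  (forall t, derivable_pt_lim psi t (psi1 t)) -> (forall t, derivable_pt_lim psi1 t (psi2 t)) ->
  (forall t, 0 <= t <= 1 -> 0 <= psi2 t) ->
  forall t, 0 <= t <= 1 -> psi t <= t * psi 1 + (1 - t) * psi 0.
Proof.
  intros D1 D2 Hp t Ht.
  destruct (Req_dec t 0) as [->|H0]; [lra|]. destruct (Req_dec t 1) as [->|H1]; [lra|].
  destruct (MVT_cor2 psi psi1 0 t ltac:(lra) (fun c _ => D1 c)) as [a [Ha Har]].
  destruct (MVT_cor2 psi psi1 t 1 ltac:(lra) (fun c _ => D1 c)) as [b [Hb Hbr]].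
  destruct (MVT_cor2 psi1 psi2 a b ltac:(lra) (fun c _ => D2 c)) as [e [He Her]].
  assert (0 <= psi2 e) by (apply Hp; lra).
  assert (psi1 a <= psi1 b) by nra.
  assert (t * (1 - t) * psi1 a <= t * (1 - t) * psi1 b) by (apply Rmult_le_compat_l; nra).
  nra.
Qed.

Lemma aff_deriv G x1 x2 t l : derivable_pt_lim G (t * x1 + (1 - t) * x2) l ->
  derivable_pt_lim (fun t => G (t * x1 + (1 - t) * x2)) t (l * (x1 - x2)).
Proof.
  intro H. apply dpl_eq with (f := comp G (fun t => t * x1 + (1 - t) * x2)) (l := l * (x1 - x2));
    [| intro; reflexivity| reflexivity].
  apply derivable_pt_lim_comp; auto.
  apply dpl_eq with (f := fun t => x1 * t + (- x2) * t + x2) (l := x1 * 1 + (-x2) * 1 + 0);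
    [| intro; ring| ring].
  apply dpl_eq with (f := plus_fct (plus_fct (mult_real_fct x1 id) (mult_real_fct (- x2) id)) (fct_cte x2))
    (l := x1 * 1 + (-x2) * 1 + 0); [| intro; reflexivity| reflexivity].
  apply derivable_pt_lim_plus; [apply derivable_pt_lim_plus|]; try apply derivable_pt_lim_scal;
    try apply derivable_pt_lim_id; apply derivable_pt_lim_const.
Qed.

Lemma prod_aff P P' Q Q' x1 x2 z1 z2 t :
  (forall y, derivable_pt_lim P y (P' y)) -> (forall y, derivable_pt_lim Q y (Q' y)) ->
  derivable_pt_lim (fun t => P (t * x1 + (1 - t) * x2) * Q (t * z1 + (1 - t) * z2)) t
    (P' (t * x1 + (1 - t) * x2) * (x1 - x2) * Q (t * z1 + (1 - t) * z2)
     + P (t * x1 + (1 - t) * x2) * (Q' (t * z1 + (1 - t) * z2) * (z1 - z2))).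
Proof.
  intros HP HQ.
  pose proof (derivable_pt_lim_mult _ _ t _ _ (aff_deriv P x1 x2 t _ (HP (t * x1 + (1 - t) * x2)))
     (aff_deriv Q z1 z2 t _ (HQ (t * z1 + (1 - t) * z2)))) as H.
  eapply dpl_eq; [exact H| intro; reflexivity| reflexivity].
Qed.

Lemma ctn_scal f a x : ctn f x -> ctn (fun y => a * f y) x.
Proof.
  intros H e He. destruct (H (e / (Rabs a + 1))) as [d [Hd Hf]].
  { apply Rdiv_lt_0_compat; [lra| pose proof (Rabs_pos a); lra]. }
  exists d. split; auto. intros y Hy. specialize (Hf y Hy).
  replace (a * f y - a * f x) with (a * (f y - f x)) by ring. rewrite Rabs_mult.
  pose proof (Rabs_pos a). pose proof (Rabs_pos (f y - f x)).
  apply Rle_lt_trans with ((Rabs a + 1) * Rabs (f y - f x)); [nra|].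
  apply Rmult_lt_compat_l with (r := Rabs a + 1) in Hf; [|lra].
  replace ((Rabs a + 1) * (e / (Rabs a + 1))) with e in Hf by (field; lra). lra.
Qed.

Lemma diff_add p l S x z d1 d2 : derivable_pt_lim p x l -> diff_within S x z d1 d2 ->
  diff_within (fun x z => p x + S x z) x z (l + d1) d2.
Proof.
  intros Hp HS eps He. destruct (dpl_bound p x l Hp (eps / 2)) as [d [Hd Hpd]]; [lra|].
  destruct (HS (eps / 2)) as [d' [Hd' HSd]]; [lra|].
  exists (Rmin d d'). split; [apply Rmin_pos; auto|]. intros x' z' Hz Hx Hz'.
  specialize (Hpd x' (Rlt_le_trans _ _ _ Hx (Rmin_l _ _))).
  specialize (HSd x' z' Hz (Rlt_le_trans _ _ _ Hx (Rmin_r _ _)) (Rlt_le_trans _ _ _ Hz' (Rmin_r _ _))).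
  replace (p x' + S x' z' - (p x + S x z) - (l + d1) * (x' - x) - d2 * (z' - z)) with
    ((p x' - p x - l * (x' - x)) + (S x' z' - S x z - d1 * (x' - x) - d2 * (z' - z))) by ring.
  eapply Rle_trans; [apply Rabs_triang|]. pose proof (Rabs_pos (z' - z)). pose proof (Rabs_pos (x' - x)). nra.
Qed.

Lemma cont_add a S x z : cont_within S x z -> cont_within (fun x z => a + S x z) x z.
Proof.
  intros H eps He. destruct (H eps He) as [d [Hd Hs]]. exists d; split; auto.
  intros. replace (a + S x' z' - (a + S x z)) with (S x' z' - S x z) by ring. auto.
Qed.

Lemma term_le_sum u k : (forall j, 0 <= u j) -> u k <= sum_f_R0 u k.
Proof.
  intro H. destruct k; simpl; [lra|]. pose proof (cond_pos_sum u k H). lra.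
Qed.

Lemma sq_dpl x : derivable_pt_lim (fun y => y ^ 2) x (2 * x).
Proof. eapply dpl_eq; [apply derivable_pt_lim_pow| intro; reflexivity| simpl; ring]. Qed.

Lemma lin_dpl x : derivable_pt_lim (fun y => 2 * y) x 2.
Proof.
  eapply dpl_eq; [apply (derivable_pt_lim_scal id 2 x); apply derivable_pt_lim_id| intro; reflexivity| ring].
Qed.

Section Main.
Variables (F : nat -> R -> Prop) (c : nat -> R).
Hypothesis hFclosed : forall n, (1 <= n)%nat -> closed_set (F n).
Hypothesis hFsub : forall n, (1 <= n)%nat -> forall alpha, F n alpha -> 0 <= alpha <= 1.
Hypothesis hFmono : forall n, (1 <= n)%nat -> forall alpha, F n alpha -> F (S n) alpha.
Hypothesis hcpos : forall n, (1 <= n)%nat -> 0 < c n.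
Variable L : R.
Hypothesis HL : infinite_sum (fun k => 81 ^ 2 / 6 * INR (S k) ^ 3 * c (S k)) L.
Hypothesis HL1 : L < 1.

Lemma S1 k : (1 <= S k)%nat. Proof. lia. Qed.
Let hcl k := hFclosed (S k) (S1 k).
Let hsb k := hFsub (S k) (S1 k).
Let hc k := hcpos (S k) (S1 k).

Definition A0 k x := c (S k) * g_ F (S k) x.
Definition A1 k x := c (S k) * G1 F (S k) x.
Definition A2 k x := c (S k) * G2 F (S k) x.
Definition B0 k z := h_ (S k) z.
Definition B1 k z := H1 (S k) z.
Definition B2 k z := H2 (S k) z.
Definition al k := c (S k) * 3000.
Definition be k := 6 * INR (S k) ^ 3.

Lemma Hab : infinite_sum (fun k => al k * be k) (18000 / (81 ^ 2 / 6) * L).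
Proof.
  eapply is_ext; [| apply (is_scale (fun k => 81 ^ 2 / 6 * INR (S k) ^ 3 * c (S k)) (18000 / (81 ^ 2 / 6))); exact HL].
  intro k. unfold al, be. field.
Qed.

Lemma dA0 k y : derivable_pt_lim (A0 k) y (A1 k y).
Proof. apply (derivable_pt_lim_scal (g_ F (S k))). apply g_deriv; [exact (hcl k)| exact (hsb k)]. Qed.
Lemma dA1 k y : derivable_pt_lim (A1 k) y (A2 k y).
Proof. apply (derivable_pt_lim_scal (G1 F (S k))). apply G1_deriv; [exact (hcl k)| exact (hsb k)]. Qed.
Lemma cA2 k y : ctn (A2 k) y.
Proof. apply (ctn_scal (G2 F (S k))). apply G2_ctn; [exact (hcl k)| exact (hsb k)]. Qed.
Lemma dB0 k y : derivable_pt_lim (B0 k) y (B1 k y). Proof. apply h_deriv. Qed.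
Lemma dB1 k y : derivable_pt_lim (B1 k) y (B2 k y). Proof. apply H1_deriv. Qed.
Lemma cB2 k y : ctn (B2 k) y. Proof. apply H2_ctn. Qed.

Lemma bA k y : Rabs (A0 k y) <= al k /\ Rabs (A1 k y) <= al k /\ Rabs (A2 k y) <= al k.
Proof.
  destruct (g_bounds F (S k) (hcl k) (hsb k) y) as [b0 [b1 b2]]. pose proof (hc k).
  unfold A0, A1, A2, al. rewrite !Rabs_mult, !(Rabs_right (c (S k))) by lra.
  repeat split; apply Rmult_le_compat_l; lra.
Qed.

Lemma bB k z : 0 <= z -> Rabs (B0 k z) <= be k /\ Rabs (B1 k z) <= be k /\ Rabs (B2 k z) <= be k.
Proof. intro Hz. apply h_bounds; auto. apply S1. Qed.

Definition u1 x z := 2 * x + ser (fun k => A1 k x * B0 k z).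
Definition u2 x z := ser (fun k => A0 k x * B1 k z).
Definition u11 x z := 2 + ser (fun k => A2 k x * B0 k z).
Definition u12 x z := ser (fun k => A1 k x * B1 k z).
Definition u22 x z := ser (fun k => A0 k x * B2 k z).

Lemma f_eq x z : f_ F c x z = x ^ 2 + ser (fun k => A0 k x * B0 k z).
Proof. reflexivity. Qed.

Lemma f_diff x z : 0 <= z -> diff_within (f_ F c) x z (u1 x z) (u2 x z).
Proof.
  intro Hz. change (f_ F c) with (fun x z => x ^ 2 + ser (fun k => A0 k x * B0 k z)).
  unfold u1. replace (2 * x + ser (fun k => A1 k x * B0 k z)) with (2 * x + ser (fun k => A1 k x * B0 k z)) by reflexivity.
  apply diff_add; [apply sq_dpl|].
  apply (series_diff A0 A1 B0 B1 al be _ dA0 dB0 (fun k y => proj1 (bA k y)) (fun k y => proj1 (proj2 (bA k y)))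
    (fun k y H => proj1 (bB k y H)) (fun k y H => proj1 (proj2 (bB k y H))) Hab x z Hz).
Qed.

Lemma u1_diff x z : 0 <= z -> diff_within u1 x z (u11 x z) (u12 x z).
Proof.
  intro Hz. unfold u1, u11, u12. apply (diff_add (fun x => 2 * x)); [apply lin_dpl|].
  apply (series_diff A1 A2 B0 B1 al be _ dA1 dB0 (fun k y => proj1 (proj2 (bA k y))) (fun k y => proj2 (proj2 (bA k y)))
    (fun k y H => proj1 (bB k y H)) (fun k y H => proj1 (proj2 (bB k y H))) Hab x z Hz).
Qed.

Lemma u2_diff x z : 0 <= z -> diff_within u2 x z (u12 x z) (u22 x z).
Proof.
  intro Hz. unfold u2, u12, u22.
  apply (series_diff A0 A1 B1 B2 al be _ dA0 dB1 (fun k y => proj1 (bA k y)) (fun k y => proj1 (proj2 (bA k y)))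
    (fun k y H => proj1 (proj2 (bB k y H))) (fun k y H => proj2 (proj2 (bB k y H))) Hab x z Hz).
Qed.

Lemma u11_cont x z : 0 <= z -> cont_within u11 x z.
Proof.
  intro Hz. unfold u11. apply cont_add.
  apply (series_cont A2 B0 al be _ cA2 (fun k y => dpl_ctn _ _ _ (dB0 k y)) (fun k y => proj2 (proj2 (bA k y)))
    (fun k y H => proj1 (bB k y H)) Hab x z Hz).
Qed.

Lemma u12_cont x z : 0 <= z -> cont_within u12 x z.
Proof.
  intro Hz. unfold u12.
  apply (series_cont A1 B1 al be _ (fun k y => dpl_ctn _ _ _ (dA1 k y)) (fun k y => dpl_ctn _ _ _ (dB1 k y))
    (fun k y => proj1 (proj2 (bA k y))) (fun k y H => proj1 (proj2 (bB k y H))) Hab x z Hz).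
Qed.

Lemma u22_cont x z : 0 <= z -> cont_within u22 x z.
Proof.
  intro Hz. unfold u22.
  apply (series_cont A0 B2 al be _ (fun k y => dpl_ctn _ _ _ (dA0 k y)) cB2
    (fun k y => proj1 (bA k y)) (fun k y H => proj2 (proj2 (bB k y H))) Hab x z Hz).
Qed.

Lemma C2 : C2_on_D (f_ F c).
Proof.
  exists u1, u2, u11, u12, u12, u22. intros x z Hz.
  repeat split; auto using f_diff, u1_diff, u2_diff, u11_cont, u12_cont, u22_cont.
Qed.

Definition KK := 81 ^ 2 / 6.
Definition phiT k x z := c (S k) * (KK * INR (S k) ^ 3 * x ^ 2 + g_ F (S k) x * h_ (S k) z).

Lemma phiT_conv k : convex_on_D (phiT k).
Proof.
  intros x1 z1 x2 z2 t Hz1 Hz2 Ht.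
  set (n := S k). set (KN := KK * INR n ^ 3). set (X := x1 - x2). set (Y := z1 - z2).
  set (gg := g_ F n). set (hh := h_ n).
  set (psi := fun t => KN * (t * x1 + (1 - t) * x2) ^ 2 + gg (t * x1 + (1 - t) * x2) * hh (t * z1 + (1 - t) * z2)).
  set (psi1 := fun t => 2 * KN * X * (t * x1 + (1 - t) * x2) + X * G1 F n (t * x1 + (1 - t) * x2) * hh (t * z1 + (1 - t) * z2)
     + Y * gg (t * x1 + (1 - t) * x2) * H1 n (t * z1 + (1 - t) * z2)).
  set (psi2 := fun t => 2 * KN * X ^ 2 + X ^ 2 * G2 F n (t * x1 + (1 - t) * x2) * hh (t * z1 + (1 - t) * z2)
     + 2 * X * Y * G1 F n (t * x1 + (1 - t) * x2) * H1 n (t * z1 + (1 - t) * z2)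
     + Y ^ 2 * gg (t * x1 + (1 - t) * x2) * H2 n (t * z1 + (1 - t) * z2)).
  assert (Dc : forall (a : R) y, derivable_pt_lim (fun _ : R => a) y 0) by (intros; apply derivable_pt_lim_const).
  assert (Dsq : forall y, derivable_pt_lim (fun y => KN * y ^ 2) y (KN * (2 * y))).
  { intro y. apply (derivable_pt_lim_scal (fun y => y ^ 2)). apply sq_dpl. }
  assert (Dlin : forall y, derivable_pt_lim (fun y => 2 * KN * X * y) y (2 * KN * X * 1)).
  { intro y. apply (derivable_pt_lim_scal id). apply derivable_pt_lim_id. }
  assert (Dg : forall y, derivable_pt_lim gg y (G1 F n y)) by (intro; apply g_deriv; [exact (hcl k)| exact (hsb k)]).
  assert (DG1 : forall y, derivable_pt_lim (fun y => X * G1 F n y) y (X * G2 F n y)).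
  { intro y. apply (derivable_pt_lim_scal (G1 F n)). apply G1_deriv; [exact (hcl k)| exact (hsb k)]. }
  assert (Dh : forall y, derivable_pt_lim hh y (H1 n y)) by (intro; apply h_deriv).
  assert (DH1 : forall y, derivable_pt_lim (fun z => Y * H1 n z) y (Y * H2 n y)).
  { intro y. apply (derivable_pt_lim_scal (H1 n)). apply H1_deriv. }
  assert (D1 : forall t, derivable_pt_lim psi t (psi1 t)).
  { intro s.
    pose proof (prod_aff _ _ _ _ x1 x2 z1 z2 s Dsq (Dc 1)) as T1.
    pose proof (prod_aff _ _ _ _ x1 x2 z1 z2 s Dg Dh) as T2.
    pose proof (derivable_pt_lim_plus _ _ s _ _ T1 T2) as T.
    eapply dpl_eq; [exact T| intro; unfold plus_fct, psi; cbv beta; ring| unfold psi1; fold X Y; ring]. }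
  assert (D2 : forall t, derivable_pt_lim psi1 t (psi2 t)).
  { intro s.
    pose proof (prod_aff _ _ _ _ x1 x2 z1 z2 s Dlin (Dc 1)) as T1.
    pose proof (prod_aff _ _ _ _ x1 x2 z1 z2 s DG1 Dh) as T2.
    pose proof (prod_aff _ _ _ _ x1 x2 z1 z2 s Dg DH1) as T3.
    pose proof (derivable_pt_lim_plus _ _ s _ _ (derivable_pt_lim_plus _ _ s _ _ T1 T2) T3) as T.
    eapply dpl_eq; [exact T| intro; unfold plus_fct, psi1; cbv beta; ring| unfold psi2; fold X Y; ring]. }
  assert (P2 : forall t, 0 <= t <= 1 -> 0 <= psi2 t).
  { intros s Hs. unfold psi2.
    set (y := s * x1 + (1 - s) * x2). set (zz := s * z1 + (1 - s) * z2).
    assert (Hzz : 0 <= zz) by (unfold zz; nra).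
    destruct (st_range F n (hcl k) (hsb k) y) as [Hs0 [Ht0 Hst]].
    assert (Hw : 0 <= hw n zz <= INR n) by (pose proof (pos_INR n); unfold hw, Rmax; destruct Rle_dec; lra).
    pose proof (key_ineq (sA F n y) (tB F n y) (hw n zz) (INR n) X Y Hs0 Ht0 Hst Hw) as K.
    unfold gg, hh. rewrite g_eq. unfold G1, G2, H1, H2, h_. fold (hw n zz).
    unfold KN, KK. replace (2 * (81 ^ 2 / 6 * INR n ^ 3) * X ^ 2) with (2187 * INR n ^ 3 * X ^ 2) by field.
    lra. }
  pose proof (convex_1d psi psi1 psi2 D1 D2 P2 t Ht) as C.
  unfold psi in C. replace (1 * x1 + (1 - 1) * x2) with x1 in C by ring.
  replace (1 * z1 + (1 - 1) * z2) with z1 in C by ring.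
  replace (0 * x1 + (1 - 0) * x2) with x2 in C by ring.
  replace (0 * z1 + (1 - 0) * z2) with z2 in C by ring.
  unfold phiT. fold n. unfold KN, gg, hh in C.
  pose proof (hc k) as Hc. fold n in Hc.
  set (I1 := KK * INR n ^ 3 * x1 ^ 2 + g_ F n x1 * h_ n z1) in *.
  set (I2 := KK * INR n ^ 3 * x2 ^ 2 + g_ F n x2 * h_ n z2) in *.
  set (It := KK * INR n ^ 3 * (t * x1 + (1 - t) * x2) ^ 2 + g_ F n (t * x1 + (1 - t) * x2) * h_ n (t * z1 + (1 - t) * z2)) in *.
  replace (t * (c n * I1) + (1 - t) * (c n * I2)) with (c n * (t * I1 + (1 - t) * I2)) by ring.
  apply Rmult_le_compat_l; lra.
Qed.

Lemma phiT_sum x z : 0 <= z -> infinite_sum (fun k => phiT k x z) (x ^ 2 * L + 1 * ser (fun k => A0 k x * B0 k z)).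
Proof.
  intro Hz. eapply is_ext; [| apply is_lin; [exact HL| eapply prod_summable]].
  - intro k. unfold phiT, A0, B0, KK. ring.
  - intro k. apply (proj1 (bA k x)).
  - intro k. apply (proj1 (bB k z Hz)).
  - exact Hab.
Qed.

Lemma f_decomp x z : 0 <= z -> f_ F c x z = (1 - L) * x ^ 2 + ser (fun k => phiT k x z).
Proof.
  intro Hz. rewrite (ser_eq _ _ (phiT_sum x z Hz)). rewrite f_eq. ring.
Qed.

Lemma Conv : convex_on_D (f_ F c).
Proof.
  intros x1 z1 x2 z2 t Hz1 Hz2 Ht.
  assert (Hzt : 0 <= t * z1 + (1 - t) * z2) by nra.
  rewrite !f_decomp by auto.
  assert (Q : (t * x1 + (1 - t) * x2) ^ 2 <= t * x1 ^ 2 + (1 - t) * x2 ^ 2).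
  { assert (t * x1 ^ 2 + (1 - t) * x2 ^ 2 - (t * x1 + (1 - t) * x2) ^ 2 = t * (1 - t) * (x1 - x2) ^ 2) by ring.
    assert (0 <= t * (1 - t) * (x1 - x2) ^ 2) by (apply Rmult_le_pos; [nra| apply pow2_ge_0]). lra. }
  assert (S : ser (fun k => phiT k (t * x1 + (1 - t) * x2) (t * z1 + (1 - t) * z2)) <=
     t * ser (fun k => phiT k x1 z1) + (1 - t) * ser (fun k => phiT k x2 z2)).
  { eapply lim_le; [| eapply ser_spec; apply phiT_sum; auto| apply is_lin; eapply ser_spec; apply phiT_sum; auto].
    intro k. apply phiT_conv; auto. }
  assert ((1 - L) * (t * x1 + (1 - t) * x2) ^ 2 <= (1 - L) * (t * x1 ^ 2 + (1 - t) * x2 ^ 2))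
    by (apply Rmult_le_compat_l; lra).
  lra.
Qed.


Lemma E_mono n m x : (1 <= n)%nat -> (n <= m)%nat -> E F n x -> E F m x.
Proof.
  intros Hn Hm HE. induction Hm; auto.
  destruct IHHm as [H|[H|[a [Ha ->]]]]; [left; auto| right; left; auto|].
  right; right. exists a. split; auto. apply hFmono; auto. lia.
Qed.

Lemma T0_nonneg k x z : 0 <= A0 k x * B0 k z.
Proof.
  unfold A0, B0. pose proof (hc k). pose proof (g_nonneg F (S k) (hcl k) (hsb k) x).
  pose proof (h_nonneg (S k) z). apply Rmult_le_pos; [apply Rmult_le_pos|]; lra.
Qed.

Lemma T0_sum x z : 0 <= z -> infinite_sum (fun k => A0 k x * B0 k z) (ser (fun k => A0 k x * B0 k z)).
Proof.
  intro Hz. eapply prod_summable; [intro k; apply (proj1 (bA k x))| intro k; apply (proj1 (bB k z Hz))| exact Hab].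
Qed.

Lemma part1 x z : 0 <= z -> f_ F c x z >= x ^ 2.
Proof.
  intro Hz. rewrite f_eq. assert (0 <= ser (fun k => A0 k x * B0 k z)).
  { eapply lim_le; [| exact is_zero| apply T0_sum; auto]. intro; apply T0_nonneg. }
  lra.
Qed.

Lemma part3 x : (exists n, (1 <= n)%nat /\ E F n x) <-> (exists z, 0 <= z /\ f_ F c x z = x ^ 2).
Proof.
  split.
  - intros [n [Hn HE]]. exists (INR n). split; [apply pos_INR|]. rewrite f_eq.
    rewrite (ser_eq _ 0); [ring|]. eapply is_ext; [| exact is_zero].
    intro k. destruct (Compare_dec.le_lt_dec (S k) n) as [Hle|Hlt].
    + unfold B0, h_. rewrite Rmax_right. { simpl; ring. } apply le_INR in Hle. lra.
    + unfold A0. assert (g_ F (S k) x = 0).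
      { apply g_zero_iff; [exact (hcl k)| exact (hsb k)|]. apply E_mono with n; auto. lia. }
      rewrite H. ring.
  - intros [z [Hz Hf]]. rewrite f_eq in Hf.
    assert (H0 : ser (fun k => A0 k x * B0 k z) = 0) by lra.
    destruct (INR_unbounded z) as [m Hm].
    exists (S m). split; [lia|].
    pose proof (T0_sum x z Hz) as Hs. rewrite H0 in Hs.
    pose proof (sum_le_lim _ _ m Hs (fun k => T0_nonneg k x z)).
    pose proof (term_le_sum (fun k => A0 k x * B0 k z) m (fun k => T0_nonneg k x z)).
    pose proof (T0_nonneg m x z).
    assert (Hz0 : A0 m x * B0 m z = 0) by (cbv beta in *; lra).
    unfold A0, B0 in Hz0.
    assert (Hh : 0 < h_ (S m) z).
    { unfold h_. rewrite S_INR. rewrite Rmax_left by lra. apply pow_lt. lra. }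
    pose proof (hc m).
    assert (g_ F (S m) x = 0).
    { destruct (Req_dec (g_ F (S m) x) 0); auto. exfalso.
      apply Rmult_integral in Hz0. destruct Hz0 as [Hz0|Hz0]; [apply Rmult_integral in Hz0; destruct Hz0|]; lra. }
    apply (g_zero_iff F (S m) (hcl m) (hsb m)); auto.
Qed.

Lemma part4 x z : 0 <= z -> f_ F c x z > x ^ 2 -> exists l, dz_within (f_ F c) x z l /\ l < 0.
Proof.
  intros Hz Hf. exists (u2 x z). split.
  - intros eps He. destruct (f_diff x z Hz eps He) as [d [Hd Hdd]]. exists d. split; auto.
    intros z' Hz' Hzd. specialize (Hdd x z' Hz' ltac:(rewrite Rminus_diag, Rabs_R0; lra) Hzd).
    rewrite Rminus_diag, Rmult_0_r, Rminus_0_r, Rabs_R0, Rplus_0_l in Hdd. exact Hdd.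
  - rewrite f_eq in Hf.
    assert (Hpos : exists k, 0 < A0 k x * B0 k z).
    { apply NNPP. intro Hn.
      assert (ser (fun k => A0 k x * B0 k z) <= 0).
      { eapply lim_le; [| apply T0_sum; auto| exact is_zero]. intro k. apply Rnot_lt_le. intro; apply Hn; eauto. }
      lra. }
    destruct Hpos as [k Hk].
    set (v := fun k => A0 k x * B1 k z).
    assert (Hv : forall j, v j <= 0).
    { intro j. unfold v, A0, B1, H1. pose proof (hc j). pose proof (g_nonneg F (S j) (hcl j) (hsb j) x).
      assert (0 <= hw (S j) z ^ 2) by apply pow2_ge_0.
      assert (0 <= c (S j) * g_ F (S j) x) by (apply Rmult_le_pos; lra). nra. }
    assert (Hvk : v k < 0).
    { unfold A0, B0 in Hk. unfold v, A0, B1, H1. pose proof (hc k).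
      pose proof (g_nonneg F (S k) (hcl k) (hsb k) x).
      assert (Hw : 0 <= hw (S k) z) by apply Rmax_r.
      unfold h_ in Hk. fold (hw (S k) z) in Hk.
      assert (hw (S k) z <> 0) by (intro E0; rewrite E0 in Hk; simpl in Hk; lra).
      assert (0 < hw (S k) z ^ 2) by (apply pow_lt; lra).
      assert (0 < c (S k) * g_ F (S k) x).
      { destruct (Rle_lt_or_eq_dec 0 (c (S k) * g_ F (S k) x)) as [?|E0]; auto.
        apply Rmult_le_pos; lra. rewrite <- E0 in Hk. lra. }
      nra. }
    assert (Hs : infinite_sum v (ser v)).
    { eapply prod_summable; [intro j; apply (proj1 (bA j x))| intro j; apply (proj1 (proj2 (bB j z Hz)))| exact Hab]. }
    pose proof (is_scale v (-1) _ Hs) as Hs'.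
    pose proof (sum_le_lim _ _ k Hs' (fun j => ltac:(pose proof (Hv j); lra))).
    pose proof (term_le_sum (fun j => -1 * v j) k (fun j => ltac:(pose proof (Hv j); lra))).
    cbv beta in *. rewrite sum_scale in *. unfold u2. fold v. lra.
Qed.

Lemma main_sec : (forall x z, 0 <= z -> f_ F c x z >= x ^ 2) /\
  (C2_on_D (f_ F c) /\ convex_on_D (f_ F c)) /\
  (forall x, (exists n, (1 <= n)%nat /\ E F n x) <-> (exists z, 0 <= z /\ f_ F c x z = x ^ 2)) /\
  (forall x z, 0 <= z -> f_ F c x z > x ^ 2 -> exists l, dz_within (f_ F c) x z l /\ l < 0).
Proof.
  split; [exact part1|]. split; [split; [exact C2| exact Conv]|]. split; [exact part3| exact part4].
Qed.

End Main.

Theorem lemma6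
  (F : nat -> R -> Prop) (c : nat -> R)
  (hFclosed : forall n, (1 <= n)%nat -> closed_set (F n))
  (hFsub : forall n, (1 <= n)%nat -> forall alpha, F n alpha -> 0 <= alpha <= 1)
  (hFmono : forall n, (1 <= n)%nat -> forall alpha, F n alpha -> F (S n) alpha)
  (hcpos : forall n, (1 <= n)%nat -> 0 < c n)
  (hcsum : exists L, infinite_sum
             (fun k => 81 ^ 2 / 6 * INR (S k) ^ 3 * c (S k)) L /\ L < 1) :
  (forall x z, 0 <= z -> f_ F c x z >= x ^ 2) /\
  (C2_on_D (f_ F c) /\ convex_on_D (f_ F c)) /\
  (forall x, (exists n, (1 <= n)%nat /\ E F n x) <->
             (exists z, 0 <= z /\ f_ F c x z = x ^ 2)) /\
  (forall x z, 0 <= z -> f_ F c x z > x ^ 2 ->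
     exists l, dz_within (f_ F c) x z l /\ l < 0).
Proof.
  destruct hcsum as [L [HL HL1]].
  eapply main_sec; eauto.
Qed.
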